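(* For the SVIQR system, if $R_0>1$ then the unique endemic equilibrium $E^*=(S_k^*,V_k^*,I_k^*,Q_k^*,R_k^* )_{k=1}^n$ (the unique equilibrium with nonnegative components and $\Theta>0$) is globally asymptotically stable: it is Lyapunov stable, and every solution whose initial data satisfy $S_k(0),V_k(0),I_k(0),Q_k(0),R_k(0)>0$ and $S_k(0)+V_k(0)+I_k(0)+Q_k(0)+R_k(0)=N_k^*$ for all $k$ converges to $E^*$ as $t\to\infty$.
   Context: Fix an integer $n\ge1$ and numbers $p(1),\dots,p(n)>0$ with $\sum_{k=1}^n p(k)=1$; set $\langle k\rangle=\sum_{k=1}^n kp(k)$. Fix constants $b>d>0$ and let $\Phi^*>0$ satisfy $\Phi^*=\frac{1}{\langle k\rangle}\sum_{i=1}^n \frac{i\,p(i)\,b\Phi^*}{d+bi\Phi^*}$. For $k=1,\dots,n$ put $N_k^*=\frac{bk\Phi^*}{d+bk\Phi^*}\in(0,1)$ and $\Lambda_k=bk(1-N_k^* )\Phi^*$ (so $\Lambda_k=dN_k^*>0$). Parameters: $\lambda(k)>0$, $\varphi(k)>0$, $\mu_k>0$ for $k=1,\dots,n$; constants $\alpha,\beta,\gamma,\eta,\omega>0$ and $\delta\in[0,1]$. For functions $I_1(t),\dots,I_n(t)$ set $\Theta(t)=\frac{1}{\langle k\rangle}\sum_{i=1}^n\varphi(i)p(i)I_i(t)$. The SVIQR system is, for $k=1,\dots,n$: $S_k'=\Lambda_k-\lambda(k)S_k\Theta+\omega V_k-(\mu_k+d)S_k$, $V_k'=\mu_kS_k-\delta\lambda(k)V_k\Theta-(d+\omega+\alpha)V_k$,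 $I_k'=\lambda(k)S_k\Theta+\delta\lambda(k)V_k\Theta-(\gamma+\beta+d)I_k$, $Q_k'=\beta I_k-(\eta+d)Q_k$, $R_k'=\gamma I_k+\eta Q_k+\alpha V_k-dR_k$. Its basic reproduction number is $R_0=\frac{1}{\langle k\rangle}\sum_{k=1}^n\varphi(k)p(k)\lambda(k)\frac{\Lambda_k(d+\omega+\alpha+\delta\mu_k)}{(\gamma+\beta+d)[(d+\alpha+\omega)d+(d+\alpha)\mu_k]}$. When $R_0>1$ the system has exactly one equilibrium with nonnegative components and $\Theta>0$ (endemic equilibrium), denoted $E^*$. *)

(* Defs.v *)
From Stdlib Require Import Reals Lra Lia.
Open Scope R_scope.

Fixpoint sum1 (n : nat) (f : nat -> R) : R :=
  match n with
  | O => 0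
  | S m => sum1 m f + f (S m)
  end.

(* Parameters of the SVIQR network model. Indices k range over 1..nn. *)
Record Params := mkParams {
  nn : nat;             (* maximal degree n *)
  pk : nat -> R;        (* degree distribution p(k) *)
  bb : R;
  dd : R;
  Phis : R;
  lam : nat -> R;
  phi : nat -> R;
  mu : nat -> R;
  palpha : R; pbeta : R; pgamma : R; peta : R; pomega : R; pdelta : R }.

Definition avgk (P : Params) : R := sum1 (nn P) (fun k => INR k * pk P k).

Definition Nstar (P : Params) (k : nat) : R :=
  bb P * INR k * Phis P / (dd P + bb P * INR k * Phis P).

Definition Lam (P : Params) (k : nat) : R :=
  bb P * INR k * (1 - Nstar P k) * Phis P.

Definition R0num (P : Params) : R :=
  / avgk P * sum1 (nn P) (fun k =>
     phi P k * pk P k * lam P k *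
     (Lam P k * (dd P + pomega P + palpha P + pdelta P * mu P k) /
      ((pgamma P + pbeta P + dd P) *
       ((dd P + palpha P + pomega P) * dd P + (dd P + palpha P) * mu P k)))).

Record state := mkState {
  sS : nat -> R; sV : nat -> R; sI : nat -> R; sQ : nat -> R; sR : nat -> R }.

Definition compo (j : nat) (s : state) : nat -> R :=
  match j with
  | O => sS s | 1%nat => sV s | 2%nat => sI s | 3%nat => sQ s | _ => sR s
  end.

Definition Theta (P : Params) (s : state) : R :=
  / avgk P * sum1 (nn P) (fun i => phi P i * pk P i * sI s i).

Definition rhs (P : Params) (s : state) : state :=
  let Th := Theta P s in
  mkState
    (fun k => Lam P k - lam P k * sS s k * Th + pomega P * sV s k
              - (mu P k + dd P) * sS s k)
    (fun k => mu P k * sS s k - pdelta P * lam P k * sV s k * Th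
              - (dd P + pomega P + palpha P) * sV s k)
    (fun k => lam P k * sS s k * Th + pdelta P * lam P k * sV s k * Th
              - (pgamma P + pbeta P + dd P) * sI s k)
    (fun k => pbeta P * sI s k - (peta P + dd P) * sQ s k)
    (fun k => pgamma P * sI s k + peta P * sQ s k + palpha P * sV s k
              - dd P * sR s k).

Definition endemic_equilibrium (P : Params) (E : state) : Prop :=
  (forall j k, (j <= 4)%nat -> (1 <= k <= nn P)%nat ->
     compo j (rhs P E) k = 0 /\ 0 <= compo j E k) /\
  0 < Theta P E.

(* x : R -> state is a solution on [0, +oo): differentiable for t > 0 with
   the SVIQR derivative, and right-continuous at t = 0. *)
Definition is_solution (P : Params) (x : R -> state) : Prop :=
  forall j k, (j <= 4)%nat -> (1 <= k <= nn P)%nat ->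
    (forall t, 0 < t ->
       derivable_pt_lim (fun u => compo j (x u) k) t (compo j (rhs P (x t)) k)) /\
    limit1_in (fun u => compo j (x u) k) (fun u => 0 <= u) (compo j (x 0) k) 0.

Definition sdist (P : Params) (s e : state) : R :=
  sum1 (nn P) (fun k =>
    Rabs (sS s k - sS e k) + Rabs (sV s k - sV e k) + Rabs (sI s k - sI e k)
    + Rabs (sQ s k - sQ e k) + Rabs (sR s k - sR e k)).

Definition total (s : state) (k : nat) : R :=
  sS s k + sV s k + sI s k + sQ s k + sR s k.

Definition feasible (P : Params) (s : state) : Prop :=
  forall k, (1 <= k <= nn P)%nat ->
    (forall j, (j <= 4)%nat -> 0 <= compo j s k) /\ total s k = Nstar P k.

Definition positive_data (P : Params) (s : state) : Prop :=
  forall k, (1 <= k <= nn P)%nat ->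
    (forall j, (j <= 4)%nat -> 0 < compo j s k) /\ total s k = Nstar P k.

(* Main.v *)
Require Import Defs.
From Stdlib Require Import Reals Lra Lia Psatz Classical List Ranalysis5.
Import ListNotations.
Open Scope R_scope.

Lemma Rabs_le_inv x B : Rabs x <= B -> - B <= x <= B.
Proof. unfold Rabs; destruct Rcase_abs; intros; lra. Qed.

Lemma sum1_ext n f g : (forall k, (1 <= k <= n)%nat -> f k = g k) -> sum1 n f = sum1 n g.
Proof.
  induction n; simpl; intros H; auto.
  rewrite IHn by (intros; apply H; lia). rewrite (H (S n)) by lia. reflexivity.
Qed.

Lemma sum1_plus n f g : sum1 n (fun k => f k + g k) = sum1 n f + sum1 n g.
Proof. induction n; simpl; [lra|rewrite IHn; lra]. Qed.

Lemma sum1_minus n f g : sum1 n (fun k => f k - g k) = sum1 n f - sum1 n g.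
Proof. induction n; simpl; [lra|rewrite IHn; lra]. Qed.

Lemma sum1_scal n c f : sum1 n (fun k => c * f k) = c * sum1 n f.
Proof. induction n; simpl; [lra|rewrite IHn; lra]. Qed.

Lemma sum1_const n c : sum1 n (fun _ => c) = INR n * c.
Proof. induction n; simpl sum1; [simpl; lra|rewrite IHn, S_INR; lra]. Qed.

Lemma sum1_le n f g : (forall k, (1 <= k <= n)%nat -> f k <= g k) -> sum1 n f <= sum1 n g.
Proof.
  induction n; simpl; intros H; [lra|].
  assert (sum1 n f <= sum1 n g) by (apply IHn; intros; apply H; lia).
  assert (f (S n) <= g (S n)) by (apply H; lia). lra.
Qed.

Lemma sum1_nonneg n f : (forall k, (1 <= k <= n)%nat -> 0 <= f k) -> 0 <= sum1 n f.
Proof.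
  intros H. replace 0 with (sum1 n (fun _ => 0)). apply sum1_le; auto.
  rewrite sum1_const; lra.
Qed.

Lemma sum1_pos n f : (1 <= n)%nat -> (forall k, (1 <= k <= n)%nat -> 0 < f k) -> 0 < sum1 n f.
Proof.
  destruct n; [lia|]. intros _ H. simpl.
  assert (0 <= sum1 n f) by (apply sum1_nonneg; intros; left; apply H; lia).
  assert (0 < f (S n)) by (apply H; lia). lra.
Qed.

Lemma sum1_term_le n f k : (forall j, (1 <= j <= n)%nat -> 0 <= f j) ->
  (1 <= k <= n)%nat -> f k <= sum1 n f.
Proof.
  induction n; intros H Hk; [lia|]. simpl.
  destruct (Nat.eq_dec k (S n)) as [->|Hne].
  - assert (0 <= sum1 n f) by (apply sum1_nonneg; intros; apply H; lia). lra.
  - assert (f k <= sum1 n f) by (apply IHn; [intros; apply H; lia| lia]).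
    assert (0 <= f (S n)) by (apply H; lia). lra.
Qed.

Lemma sum1_abs n f : Rabs (sum1 n f) <= sum1 n (fun k => Rabs (f k)).
Proof.
  induction n; simpl. rewrite Rabs_R0; lra.
  eapply Rle_trans; [apply Rabs_triang|]. lra.
Qed.

Fixpoint min1 (n : nat) (f : nat -> R) : R :=
  match n with O => 1 | S m => Rmin (min1 m f) (f (S m)) end.

Lemma min1_le n f k : (1 <= k <= n)%nat -> min1 n f <= f k.
Proof.
  induction n; intros Hk; [lia|]. simpl.
  destruct (Nat.eq_dec k (S n)) as [->|Hne]. apply Rmin_r.
  eapply Rle_trans; [apply Rmin_l|]. apply IHn; lia.
Qed.

Lemma min1_pos n f : (forall k, (1 <= k <= n)%nat -> 0 < f k) -> 0 < min1 n f.
Proof.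
  induction n; simpl; intros H; [lra|].
  apply Rmin_glb_lt. apply IHn; intros; apply H; lia. apply H; lia.
Qed.

Lemma min1_ge n f c : c <= 1 -> (forall k, (1 <= k <= n)%nat -> c <= f k) -> c <= min1 n f.
Proof.
  induction n; simpl; intros Hc H; [lra|].
  apply Rmin_glb. apply IHn; auto; intros; apply H; lia. apply H; lia.
Qed.

Lemma fin_exists n (Q : nat -> R -> Prop) :
  (forall k, (1 <= k <= n)%nat -> exists M, forall M', M <= M' -> Q k M') ->
  exists M, forall M', M <= M' -> forall k, (1 <= k <= n)%nat -> Q k M'.
Proof.
  induction n; intros H.
  - exists 0. intros; lia.
  - destruct IHn as [M1 H1]. intros; apply H; lia.
    destruct (H (S n)) as [M2 H2]. lia.
    exists (Rmax M1 M2). intros M' HM k Hk.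
    destruct (Nat.eq_dec k (S n)) as [->|Hne].
    + apply H2. eapply Rle_trans; [apply Rmax_r|exact HM].
    + apply H1. eapply Rle_trans; [apply Rmax_l|exact HM]. lia.
Qed.

Definition rc (f : R -> R) (a : R) := limit1_in f (fun u => a <= u) (f a) a.

Lemma limit1_in_unfold f D l x0 : limit1_in f D l x0 <->
  forall eps, 0 < eps -> exists alp, 0 < alp /\
    forall u, D u -> Rabs (u - x0) < alp -> Rabs (f u - l) < eps.
Proof.
  unfold limit1_in, limit_in; simpl; unfold Rdist. split.
  - intros H eps He. destruct (H eps He) as [alp [Ha H']]. exists alp; split; auto.
  - intros H eps He. destruct (H eps He) as [alp [Ha H']]. exists alp; split; auto.
    intros u [Hu1 Hu2]; auto.
Qed.

Lemma limit1_in_sub f D D' l x0 : (forall u, D' u -> D u \/ u = x0) -> f x0 = l ->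
  limit1_in f D l x0 -> limit1_in f D' l x0.
Proof.
  intros HD Hf H. rewrite limit1_in_unfold in *. intros eps He.
  destruct (H eps He) as [alp [Ha H']]. exists alp; split; auto.
  intros u Du Hu. destruct (HD u Du) as [Hd| ->]. auto.
  rewrite Hf. unfold Rminus; rewrite Rplus_opp_r, Rabs_R0. lra.
Qed.

Lemma cont_lim f t D : continuity_pt f t -> limit1_in f D (f t) t.
Proof.
  intros H. unfold continuity_pt, continue_in in H.
  eapply limit1_in_sub; [|reflexivity|exact H].
  intros u _. destruct (Req_dec u t); [right; auto | left; split; [exact I| auto]].
Qed.

Lemma deriv_lim f t l D : derivable_pt_lim f t l -> limit1_in f D (f t) t.
Proof.
  intros H. apply cont_lim. apply derivable_continuous_pt. exists l; exact H.
Qed.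

Lemma lim_const c D t : limit1_in (fun _ => c) D c t.
Proof.
  rewrite limit1_in_unfold. intros eps He. exists 1; split; [lra|].
  intros. unfold Rminus; rewrite Rplus_opp_r, Rabs_R0. lra.
Qed.

Lemma lim_plus f g D t : limit1_in f D (f t) t -> limit1_in g D (g t) t ->
  limit1_in (fun u => f u + g u) D (f t + g t) t.
Proof. apply limit_plus. Qed.

Lemma lim_mult f g D t : limit1_in f D (f t) t -> limit1_in g D (g t) t ->
  limit1_in (fun u => f u * g u) D (f t * g t) t.
Proof. apply limit_mul. Qed.

Lemma lim_opp f D t : limit1_in f D (f t) t -> limit1_in (fun u => - f u) D (- f t) t.
Proof. apply limit_Ropp. Qed.

Lemma lim_minus f g D t : limit1_in f D (f t) t -> limit1_in g D (g t) t ->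
  limit1_in (fun u => f u - g u) D (f t - g t) t.
Proof. apply limit_minus. Qed.

Lemma lim_comp f g D t : limit1_in f D (f t) t -> continuity_pt g (f t) ->
  limit1_in (fun u => g (f u)) D (g (f t)) t.
Proof.
  intros Hf Hg. rewrite limit1_in_unfold in *. unfold continuity_pt, continue_in in Hg.
  rewrite limit1_in_unfold in Hg.
  intros eps He. destruct (Hg eps He) as [a1 [Ha1 H1]].
  destruct (Hf a1 Ha1) as [a2 [Ha2 H2]]. exists a2; split; auto.
  intros u Du Hu. destruct (Req_dec (f u) (f t)) as [E|E].
  - rewrite E. unfold Rminus; rewrite Rplus_opp_r, Rabs_R0. lra.
  - apply H1. split; [exact I| auto]. auto.
Qed.

Lemma lim_inv f D t : limit1_in f D (f t) t -> f t <> 0 ->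
  limit1_in (fun u => / f u) D (/ f t) t.
Proof. apply limit_inv. Qed.

Lemma lim_Rmin f g D t : limit1_in f D (f t) t -> limit1_in g D (g t) t ->
  limit1_in (fun u => Rmin (f u) (g u)) D (Rmin (f t) (g t)) t.
Proof.
  rewrite !limit1_in_unfold. intros Hf Hg eps He.
  destruct (Hf eps He) as [a1 [Ha1 H1]]. destruct (Hg eps He) as [a2 [Ha2 H2]].
  exists (Rmin a1 a2); split. apply Rmin_glb_lt; auto.
  intros u Du Hu. assert (Hu1 : Rabs (u - t) < a1) by (eapply Rlt_le_trans; [exact Hu| apply Rmin_l]).
  assert (Hu2 : Rabs (u - t) < a2) by (eapply Rlt_le_trans; [exact Hu| apply Rmin_r]).
  specialize (H1 u Du Hu1). specialize (H2 u Du Hu2).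
  apply Rabs_def2 in H1. apply Rabs_def2 in H2. apply Rabs_def1;
  unfold Rmin; repeat destruct Rle_dec; lra.
Qed.

Lemma lim_sum1 n (F : nat -> R -> R) D t :
  (forall k, (1 <= k <= n)%nat -> limit1_in (F k) D (F k t) t) ->
  limit1_in (fun u => sum1 n (fun k => F k u)) D (sum1 n (fun k => F k t)) t.
Proof.
  induction n; intros H; simpl. apply lim_const.
  apply (lim_plus (fun u => sum1 n (fun k => F k u)) (F (S n))).
  apply IHn; intros; apply H; lia. apply H; lia.
Qed.

Lemma lim_min1 n (F : nat -> R -> R) D t :
  (forall k, (1 <= k <= n)%nat -> limit1_in (F k) D (F k t) t) ->
  limit1_in (fun u => min1 n (fun k => F k u)) D (min1 n (fun k => F k t)) t.
Proof.
  induction n; intros H; simpl. apply lim_const.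
  apply (lim_Rmin (fun u => min1 n (fun k => F k u)) (F (S n))).
  apply IHn; intros; apply H; lia. apply H; lia.
Qed.

Lemma deriv_sum1 n (F : nat -> R -> R) (DF : nat -> R) t :
  (forall k, (1 <= k <= n)%nat -> derivable_pt_lim (F k) t (DF k)) ->
  derivable_pt_lim (fun u => sum1 n (fun k => F k u)) t (sum1 n DF).
Proof.
  induction n; intros H; simpl. apply derivable_pt_lim_const.
  apply (derivable_pt_lim_plus (fun u => sum1 n (fun k => F k u)) (F (S n))).
  apply IHn; intros; apply H; lia. apply H; lia.
Qed.

Lemma mvt_gen f D c a b : a < b ->
  (forall t, a < t <= b -> derivable_pt_lim f t (D t)) ->
  (forall t, a < t < b -> D t <= c) -> rc f a ->
  f b - f a <= c * (b - a).
Proof.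
  intros Hab Hd Hc Hrc. apply Rle_plus_epsilon. intros eps He.
  unfold rc in Hrc. rewrite limit1_in_unfold in Hrc.
  destruct (Hrc (eps/2)) as [alp [Ha H1]]. lra.
  set (e := Rmin (alp/2) (Rmin ((b-a)/2) (eps / (2 * (Rabs c + 1))))).
  assert (He0 : 0 < e). { unfold e. repeat apply Rmin_glb_lt; try lra.
    apply Rdiv_lt_0_compat; [lra|]. pose proof (Rabs_pos c); lra. }
  assert (He1 : e <= alp/2) by apply Rmin_l.
  assert (He2 : e <= (b-a)/2) by (eapply Rle_trans; [apply Rmin_r| apply Rmin_l]).
  assert (He3 : e <= eps / (2 * (Rabs c + 1))) by (eapply Rle_trans; [apply Rmin_r| apply Rmin_r]).
  destruct (MVT_cor2 f D (a+e) b) as [xi [Hxi1 Hxi2]]. lra.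
  intros u Hu. apply Hd. lra.
  assert (Dxi : D xi <= c) by (apply Hc; lra).
  assert (A1 : Rabs (f (a+e) - f a) < eps/2).
  { apply H1. lra. replace (a+e-a) with e by ring. rewrite Rabs_pos_eq; lra. }
  apply Rabs_def2 in A1.
  assert (A2 : f b - f (a+e) <= c * (b - (a+e))).
  { rewrite Hxi1. apply Rmult_le_compat_r; lra. }
  assert (A3 : - c * e <= Rabs c * e).
  { apply Rmult_le_compat_r. lra. rewrite <- Rabs_Ropp. apply RRle_abs. }
  assert (A4 : Rabs c * e <= eps/2).
  { assert (Rabs c * e <= (Rabs c + 1) * e) by (pose proof (Rabs_pos c); nra).
    assert ((Rabs c + 1) * e <= (Rabs c + 1) * (eps / (2 * (Rabs c + 1)))).
    { apply Rmult_le_compat_l; [pose proof (Rabs_pos c); lra| exact He3]. }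
    replace ((Rabs c + 1) * (eps / (2 * (Rabs c + 1)))) with (eps/2) in H0.
    lra. field. pose proof (Rabs_pos c); lra. }
  lra.
Qed.

Lemma mvt_ge f D c a b : a < b ->
  (forall t, a < t <= b -> derivable_pt_lim f t (D t)) ->
  (forall t, a < t < b -> c <= D t) -> rc f a ->
  c * (b - a) <= f b - f a.
Proof.
  intros Hab Hd Hc Hrc.
  assert (H := mvt_gen (fun u => - f u) (fun u => - D u) (-c) a b Hab).
  assert (- f b - - f a <= - c * (b - a)); [|lra].
  apply H. intros; apply derivable_pt_lim_opp; auto. intros; specialize (Hc t H0); lra.
  unfold rc in *. apply (lim_opp f). exact Hrc.
Qed.

Lemma rc_deriv f a l : derivable_pt_lim f a l -> rc f a.
Proof. intros H; unfold rc; eapply deriv_lim; eauto. Qed.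

Lemma lip_from_deriv f D B :
  (forall t, 0 < t -> derivable_pt_lim f t (D t)) ->
  (forall t, 0 < t -> Rabs (D t) <= B) ->
  forall t s, 0 < t -> 0 < s -> Rabs (f t - f s) <= B * Rabs (t - s).
Proof.
  intros Hd HB.
  assert (K : forall t s, 0 < s -> s < t -> Rabs (f t - f s) <= B * Rabs (t - s)).
  { intros t s Hs Hst.
    assert (U : f t - f s <= B * (t - s)).
    { apply (mvt_gen f D); auto. intros; apply Hd; lra.
      intros u Hu. specialize (HB u ltac:(lra)). apply Rabs_le_inv in HB; lra.
      apply (rc_deriv f s (D s)); apply Hd; lra. }
    assert (L : (-B) * (t - s) <= f t - f s).
    { apply (mvt_ge f D); auto. intros; apply Hd; lra.
      intros u Hu. specialize (HB u ltac:(lra)). apply Rabs_le_inv in HB; lra.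
      apply (rc_deriv f s (D s)); apply Hd; lra. }
    rewrite (Rabs_pos_eq (t - s)) by lra. apply Rabs_le. lra. }
  intros t s Ht Hs. destruct (Rtotal_order s t) as [H|[H|H]].
  - apply K; auto.
  - subst. unfold Rminus; rewrite !Rplus_opp_r, Rabs_R0. rewrite Rmult_0_r; lra.
  - rewrite <- (Rabs_Ropp (f t - f s)), <- (Rabs_Ropp (t - s)).
    replace (- (f t - f s)) with (f s - f t) by ring. replace (-(t-s)) with (s - t) by ring.
    apply K; auto.
Qed.

Definition cvinf (f : R -> R) (l : R) :=
  forall eps, 0 < eps -> exists T, forall t, T <= t -> Rabs (f t - l) < eps.

Lemma cv_const c : cvinf (fun _ => c) c.
Proof. intros eps He; exists 0; intros. unfold Rminus; rewrite Rplus_opp_r, Rabs_R0; lra. Qed.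

Lemma cv_ext f g l : (forall t, 0 < t -> f t = g t) -> cvinf f l -> cvinf g l.
Proof.
  intros H Hf eps He. destruct (Hf eps He) as [T HT]. exists (Rmax T 1). intros t Ht.
  rewrite <- H. apply HT. eapply Rle_trans; [apply Rmax_l| exact Ht].
  eapply Rlt_le_trans; [|eapply Rle_trans; [apply Rmax_r|exact Ht]]. lra.
Qed.

Lemma cv_plus f g a b : cvinf f a -> cvinf g b -> cvinf (fun t => f t + g t) (a + b).
Proof.
  intros Hf Hg eps He. destruct (Hf (eps/2)) as [T1 H1]; [lra|].
  destruct (Hg (eps/2)) as [T2 H2]; [lra|]. exists (Rmax T1 T2). intros t Ht.
  assert (A := H1 t (Rle_trans _ _ _ (Rmax_l _ _) Ht)).
  assert (B := H2 t (Rle_trans _ _ _ (Rmax_r _ _) Ht)).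
  replace (f t + g t - (a + b)) with ((f t - a) + (g t - b)) by ring.
  eapply Rle_lt_trans; [apply Rabs_triang|]. lra.
Qed.

Lemma cv_scal c f a : cvinf f a -> cvinf (fun t => c * f t) (c * a).
Proof.
  intros Hf eps He. destruct (Hf (eps / (Rabs c + 1))) as [T HT].
  apply Rdiv_lt_0_compat; [lra| pose proof (Rabs_pos c); lra].
  exists T. intros t Ht. specialize (HT t Ht).
  replace (c * f t - c * a) with (c * (f t - a)) by ring. rewrite Rabs_mult.
  assert (Rabs c * Rabs (f t - a) <= (Rabs c + 1) * Rabs (f t - a)).
  { pose proof (Rabs_pos (f t - a)); nra. }
  assert ((Rabs c + 1) * Rabs (f t - a) < (Rabs c + 1) * (eps / (Rabs c + 1))).
  { apply Rmult_lt_compat_l; [pose proof (Rabs_pos c); lra| exact HT]. }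
  replace ((Rabs c + 1) * (eps / (Rabs c + 1))) with eps in H0. lra.
  field. pose proof (Rabs_pos c); lra.
Qed.

Lemma cv_opp f a : cvinf f a -> cvinf (fun t => - f t) (- a).
Proof.
  intros H. assert (K := cv_scal (-1) f a H). intros eps He. destruct (K eps He) as [T HT].
  exists T; intros t Ht. specialize (HT t Ht). replace (- f t - - a) with (-1 * f t - -1 * a) by ring. auto.
Qed.

Lemma cv_minus f g a b : cvinf f a -> cvinf g b -> cvinf (fun t => f t - g t) (a - b).
Proof. intros Hf Hg. apply (cv_plus f (fun t => - g t) a (-b)); auto. apply cv_opp; auto. Qed.

Lemma cv_mult f g a b : cvinf f a -> cvinf g b -> cvinf (fun t => f t * g t) (a * b).
Proof.
  intros Hf Hg eps He.
  assert (Pa : 0 < Rabs a + 1) by (pose proof (Rabs_pos a); lra).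
  assert (Pb : 0 < Rabs b + 1) by (pose proof (Rabs_pos b); lra).
  destruct (Hf (Rmin 1 (eps / (2 * (Rabs b + 1))))) as [T1 H1].
  { apply Rmin_glb_lt; [lra| apply Rdiv_lt_0_compat; lra]. }
  destruct (Hg (eps / (2 * (Rabs a + 1)))) as [T2 H2]. apply Rdiv_lt_0_compat; lra.
  exists (Rmax T1 T2). intros t Ht.
  assert (A := H1 t (Rle_trans _ _ _ (Rmax_l _ _) Ht)).
  assert (B := H2 t (Rle_trans _ _ _ (Rmax_r _ _) Ht)).
  assert (A1 : Rabs (f t - a) < 1) by (eapply Rlt_le_trans; [exact A| apply Rmin_l]).
  assert (A2 : Rabs (f t - a) < eps / (2 * (Rabs b + 1))) by (eapply Rlt_le_trans; [exact A| apply Rmin_r]).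
  assert (Hfa : Rabs (f t) <= Rabs a + 1).
  { replace (f t) with ((f t - a) + a) by ring. eapply Rle_trans; [apply Rabs_triang|]. lra. }
  replace (f t * g t - a * b) with (f t * (g t - b) + b * (f t - a)) by ring.
  eapply Rle_lt_trans; [apply Rabs_triang|]. rewrite !Rabs_mult.
  assert (Rabs (f t) * Rabs (g t - b) <= (Rabs a + 1) * (eps / (2 * (Rabs a + 1)))).
  { apply Rmult_le_compat; try apply Rabs_pos; lra. }
  assert (Rabs b * Rabs (f t - a) < (Rabs b + 1) * (eps / (2 * (Rabs b + 1)))).
  { pose proof (Rabs_pos b); pose proof (Rabs_pos (f t - a)).
    apply Rle_lt_trans with ((Rabs b + 1) * Rabs (f t - a)). nra.
    apply Rmult_lt_compat_l; lra. }
  replace ((Rabs a + 1) * (eps / (2 * (Rabs a + 1)))) with (eps/2) in H by (field; lra).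
  replace ((Rabs b + 1) * (eps / (2 * (Rabs b + 1)))) with (eps/2) in H0 by (field; lra).
  lra.
Qed.

Lemma cv_inv f a : cvinf f a -> a <> 0 -> cvinf (fun t => / f t) (/ a).
Proof.
  intros Hf Ha eps He. assert (Pa : 0 < Rabs a) by (apply Rabs_pos_lt; auto).
  destruct (Hf (Rmin (Rabs a / 2) (eps * (Rabs a * Rabs a) / 2))) as [T HT].
  { apply Rmin_glb_lt. lra. apply Rdiv_lt_0_compat; [|lra]. apply Rmult_lt_0_compat; nra. }
  exists T. intros t Ht. specialize (HT t Ht).
  assert (H1 : Rabs (f t - a) < Rabs a / 2) by (eapply Rlt_le_trans; [exact HT| apply Rmin_l]).
  assert (H2 : Rabs (f t - a) < eps * (Rabs a * Rabs a) / 2) by (eapply Rlt_le_trans; [exact HT| apply Rmin_r]).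
  assert (Hft : Rabs a / 2 < Rabs (f t)).
  { assert (Rabs a <= Rabs (f t) + Rabs (f t - a)).
    { replace a with (f t - (f t - a)) at 1 by ring. eapply Rle_trans; [apply Rabs_triang|].
      rewrite Rabs_Ropp. lra. } lra. }
  assert (fne : f t <> 0). { intro E; rewrite E, Rabs_R0 in Hft; lra. }
  replace (/ f t - / a) with ((a - f t) / (f t * a)) by (field; auto).
  unfold Rdiv. rewrite Rabs_mult, Rabs_inv, Rabs_mult.
  rewrite <- Rabs_Ropp. replace (- (a - f t)) with (f t - a) by ring.
  apply Rmult_lt_reg_r with (Rabs (f t) * Rabs a). nra.
  rewrite Rmult_assoc, Rinv_l by nra. rewrite Rmult_1_r.
  assert (eps * (Rabs a * Rabs a) / 2 <= eps * (Rabs (f t) * Rabs a)).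
  { apply Rle_trans with (eps * ((Rabs a / 2) * Rabs a)). right; field.
    apply Rmult_le_compat_l; [lra|]. apply Rmult_le_compat_r; lra. }
  lra.
Qed.

Lemma cv_sum1 n (F : nat -> R -> R) (l : nat -> R) :
  (forall k, (1 <= k <= n)%nat -> cvinf (F k) (l k)) ->
  cvinf (fun t => sum1 n (fun k => F k t)) (sum1 n l).
Proof.
  induction n; intros H; simpl. apply cv_const.
  apply (cv_plus (fun t => sum1 n (fun k => F k t)) (F (S n))).
  apply IHn; intros; apply H; lia. apply H; lia.
Qed.

Lemma cv_unique_const f a b : cvinf f a -> (forall t, f t = b) -> a = b.
Proof.
  intros H Hc. destruct (Req_dec a b) as [|Hne]; auto.
  assert (P : 0 < Rabs (b - a)) by (apply Rabs_pos_lt; lra).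
  destruct (H _ P) as [T HT]. specialize (HT T (Rle_refl _)). rewrite Hc in HT. lra.
Qed.

Lemma deriv_expk k T t : derivable_pt_lim (fun u => exp (k * (u - T))) t (k * exp (k * (t - T))).
Proof.
  assert (H : derivable_pt_lim (fun u => k * (u - T)) t k).
  { intros eps He. exists (mkposreal 1 Rlt_0_1). intros h Hh _.
    replace ((k * (t + h - T) - k * (t - T)) / h - k) with 0 by (field; auto).
    rewrite Rabs_R0; auto. }
  assert (H2 := derivable_pt_lim_comp _ exp t k _ H (derivable_pt_lim_exp (k * (t - T)))).
  unfold comp in H2. replace (k * exp (k * (t - T))) with (exp (k * (t - T)) * k) by ring. exact H2.
Qed.



Lemma deriv_eq f t l l' : l = l' -> derivable_pt_lim f t l -> derivable_pt_lim f t l'.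
Proof. intros ->; auto. Qed.

Lemma LF_bound y F k Fs T eps t : 0 < k -> 0 <= T -> 0 <= eps ->
  (forall u, 0 < u -> derivable_pt_lim y u (F u - k * y u)) -> rc y T ->
  (forall u, T < u -> Rabs (F u - Fs) <= eps) -> T <= t ->
  Rabs (y t - Fs/k) <= Rabs (y T - Fs/k) * exp (-(k*(t-T))) + eps/k.
Proof.
  intros Hk HT He Hy Hrc HF Ht.
  assert (ek : 0 <= eps / k) by (apply Rmult_le_pos; [lra| left; apply Rinv_0_lt_compat; lra]).
  destruct (Req_dec t T) as [->|Hne].
  { replace (-(k*(T-T))) with 0 by ring. rewrite exp_0. lra. }
  assert (HtT : T < t) by lra.
  set (E := fun u => exp (k * (u - T))).
  assert (ET : E T = 1) by (unfold E; replace (k*(T-T)) with 0 by ring; apply exp_0).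
  assert (Epos : forall u, 0 < E u) by (intros; apply exp_pos).
  assert (ElimT : limit1_in E (fun u => T <= u) (E T) T) by (apply (deriv_lim E T _ _ (deriv_expk k T T))).
  set (Et := E t). set (iE := exp (-(k*(t-T)))).
  assert (EiE : Et * iE = 1). { unfold Et, iE, E. rewrite <- exp_plus. replace (k*(t-T) + - (k*(t-T))) with 0 by ring. apply exp_0. }
  assert (Etp : 0 < Et) by apply Epos. assert (iEp : 0 < iE) by apply exp_pos.
  assert (U : (y t - Fs/k - eps/k) * Et <= y T - Fs/k - eps/k).
  { set (h := fun u => (y u - Fs/k) * E u - eps/k * E u).
    assert (Hd : forall u, 0 < u -> derivable_pt_lim h u ((F u - Fs - eps) * E u)).
    { intros u Hu.
      assert (H := derivable_pt_lim_minus _ _ u _ _ (derivable_pt_lim_mult _ _ u _ _ (derivable_pt_lim_minus _ _ u _ _ (Hy u Hu) (derivable_pt_lim_const (Fs/k) u)) (deriv_expk k T u)) (derivable_pt_lim_scal _ (eps/k) u _ (deriv_expk k T u))).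
      eapply deriv_eq; [|exact H]. unfold minus_fct, mult_fct, mult_real_fct, fct_cte, plus_fct, E. field. lra. }
    assert (M := mvt_gen h (fun u => (F u - Fs - eps) * E u) 0 T t HtT).
    assert (h t - h T <= 0 * (t - T)).
    { apply M. intros; apply Hd; lra.
      intros u Hu. specialize (HF u ltac:(lra)). apply Rabs_le_inv in HF. specialize (Epos u). nra.
      unfold rc, h. apply (lim_minus (fun u => (y u - Fs/k) * E u) (fun u => eps/k * E u)).
      apply (lim_mult (fun u => y u - Fs/k) E). apply (lim_minus y (fun _ => Fs/k)). exact Hrc. apply lim_const. exact ElimT.
      apply (lim_mult (fun _ => eps/k) E). apply lim_const. exact ElimT. }
    unfold h in H. rewrite ET in H. fold Et in H. lra. }
  assert (L : y T - Fs/k + eps/k <= (y t - Fs/k + eps/k) * Et).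
  { set (h := fun u => (y u - Fs/k) * E u + eps/k * E u).
    assert (Hd : forall u, 0 < u -> derivable_pt_lim h u ((F u - Fs + eps) * E u)).
    { intros u Hu.
      assert (H := derivable_pt_lim_plus _ _ u _ _ (derivable_pt_lim_mult _ _ u _ _ (derivable_pt_lim_minus _ _ u _ _ (Hy u Hu) (derivable_pt_lim_const (Fs/k) u)) (deriv_expk k T u)) (derivable_pt_lim_scal _ (eps/k) u _ (deriv_expk k T u))).
      eapply deriv_eq; [|exact H]. unfold minus_fct, mult_fct, mult_real_fct, fct_cte, plus_fct, E. field. lra. }
    assert (M := mvt_ge h (fun u => (F u - Fs + eps) * E u) 0 T t HtT).
    assert (0 * (t - T) <= h t - h T).
    { apply M. intros; apply Hd; lra.
      intros u Hu. specialize (HF u ltac:(lra)). apply Rabs_le_inv in HF. specialize (Epos u). nra.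
      unfold rc, h. apply (lim_plus (fun u => (y u - Fs/k) * E u) (fun u => eps/k * E u)).
      apply (lim_mult (fun u => y u - Fs/k) E). apply (lim_minus y (fun _ => Fs/k)). exact Hrc. apply lim_const. exact ElimT.
      apply (lim_mult (fun _ => eps/k) E). apply lim_const. exact ElimT. }
    unfold h in H. rewrite ET in H. fold Et in H. lra. }
  set (a := y t - Fs/k) in *. set (b := y T - Fs/k) in *.
  assert (U2 : a - eps/k <= (b - eps/k) * iE).
  { apply Rmult_le_compat_r with (r := iE) in U; [|lra].
    replace ((a - eps/k) * Et * iE) with (a - eps/k) in U by (rewrite Rmult_assoc, EiE; ring). exact U. }
  assert (L2 : (b + eps/k) * iE <= a + eps/k).
  { apply Rmult_le_compat_r with (r := iE) in L; [|lra].
    replace ((a + eps/k) * Et * iE) with (a + eps/k) in L by (rewrite Rmult_assoc, EiE; ring). exact L. }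
  assert (B1 : b * iE <= Rabs b * iE) by (apply Rmult_le_compat_r; [lra| apply RRle_abs]).
  assert (B2 : - (Rabs b * iE) <= b * iE).
  { assert (-Rabs b <= b) by (rewrite <- Rabs_Ropp; pose proof (RRle_abs (-b)); lra). nra. }
  assert (0 <= eps / k * iE) by (apply Rmult_le_pos; lra).
  apply Rabs_le. split; nra.
Qed.

Lemma exp_neg_small C k eps x : 0 <= C -> 0 < k -> 0 < eps -> 0 <= x ->
  2 * C / (k * eps) + 1 <= x -> C * exp (-(k * x)) < eps / 2.
Proof.
  intros HC Hk He Hx Hb.
  assert (E1 : 1 + k * x <= exp (k * x)) by apply exp_ineq1_le.
  assert (E2 : exp (-(k*x)) * exp (k*x) = 1) by (rewrite <- exp_plus; replace (-(k*x) + k*x) with 0 by ring; apply exp_0).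
  assert (P1 : 0 < exp (-(k*x))) by apply exp_pos.
  assert (kx : 2 * C / eps + k <= k * x).
  { apply Rmult_le_compat_l with (r := k) in Hb; [|lra].
    replace (k * (2 * C / (k * eps) + 1)) with (2 * C / eps + k) in Hb by (field; lra). exact Hb. }
  assert (Q : 2 * C / eps * eps = 2 * C) by (field; lra).
  assert (0 <= 2 * C / eps) by (apply Rmult_le_pos; [lra| left; apply Rinv_0_lt_compat; lra]).
  assert (C * exp (-(k*x)) * (1 + k * x) <= C).
  { apply Rle_trans with (C * exp (-(k*x)) * exp (k*x)).
    apply Rmult_le_compat_l; [apply Rmult_le_pos; lra| exact E1].
    rewrite Rmult_assoc, E2; lra. }
  assert (C * exp (-(k*x)) * (2 * C / eps + k + 1) <= C * exp (-(k*x)) * (1 + k * x)).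
  { apply Rmult_le_compat_l. apply Rmult_le_pos; lra. lra. }
  set (w := C * exp (-(k*x))) in *. set (z := 2 * C / eps) in *.
  assert (0 <= w) by (apply Rmult_le_pos; lra).
  apply Rnot_le_lt. intro Hw.
  assert (eps / 2 * z <= w * z) by (apply Rmult_le_compat_r; lra).
  assert (eps / 2 * z = C) by (unfold z; field; lra).
  assert (0 < w * (k + 1)) by (apply Rmult_lt_0_compat; lra).
  nra.
Qed.

Lemma LF_cv y F k Fs : 0 < k ->
  (forall u, 0 < u -> derivable_pt_lim y u (F u - k * y u)) -> cvinf F Fs ->
  cvinf y (Fs / k).
Proof.
  intros Hk Hy HF eps He.
  destruct (HF (eps * k / 2)) as [T1 H1]. apply Rmult_lt_0_compat; [nra|lra].
  set (T := Rmax T1 1). assert (T1le : T1 <= T) by apply Rmax_l. assert (Tpos : 1 <= T) by apply Rmax_r.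
  set (C := Rabs (y T - Fs / k)).
  exists (T + (2 * C / (k * eps) + 1)). intros t Ht.
  assert (C0 : 0 <= C) by apply Rabs_pos.
  assert (0 <= 2 * C / (k * eps)) by (apply Rmult_le_pos; [lra| left; apply Rinv_0_lt_compat; nra]).
  assert (B := LF_bound y F k Fs T (eps * k / 2) t Hk ltac:(lra) ltac:(nra) Hy (rc_deriv _ _ _ (Hy T ltac:(lra)))).
  assert (Rabs (y t - Fs / k) <= C * exp (- (k * (t - T))) + eps * k / 2 / k).
  { apply B. intros u Hu. left; apply H1; lra. lra. }
  assert (C * exp (-(k * (t - T))) < eps / 2) by (apply exp_neg_small; lra).
  replace (eps * k / 2 / k) with (eps / 2) in H0 by (field; lra). lra.
Qed.

Lemma nonincr Lf D : (forall t, 0 < t -> derivable_pt_lim Lf t (D t)) ->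
  (forall t, 0 < t -> D t <= 0) -> forall s t, 0 < s -> s <= t -> Lf t <= Lf s.
Proof.
  intros Hd HD s t Hs Hst. destruct (Req_dec s t) as [->|]; [lra|].
  assert (Lf t - Lf s <= 0 * (t - s)); [|lra].
  apply (mvt_gen Lf D); try lra. intros; apply Hd; lra. intros; apply HD; lra.
  apply (rc_deriv _ _ (D s)); apply Hd; lra.
Qed.

Lemma glb_pos (Lf : R -> R) : (forall t, 0 < t -> 0 <= Lf t) ->
  exists l, (forall t, 0 < t -> l <= Lf t) /\
    (forall eta, 0 < eta -> exists t, 0 < t /\ Lf t < l + eta).
Proof.
  intros H. set (E := fun r => exists t, 0 < t /\ r = - Lf t).
  destruct (completeness E) as [m [Hub Hl]].
  - exists 0. intros r [t [Ht ->]]. specialize (H t Ht). lra.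
  - exists (- Lf 1). exists 1. split; [lra|auto].
  - exists (- m). split.
    + intros t Ht. assert (- Lf t <= m) by (apply Hub; exists t; auto). lra.
    + intros eta He. apply NNPP. intro Hn.
      assert (m <= m - eta); [|lra]. apply Hl. intros r [t [Ht ->]].
      assert (~ (0 < t /\ Lf t < - m + eta)) by (intro Hc; apply Hn; exists t; auto).
      destruct (Rlt_le_dec (Lf t) (- m + eta)); [exfalso; auto| lra].
Qed.

Lemma BL Lf D f fs c0 B : 0 < c0 ->
  (forall t, 0 < t -> derivable_pt_lim Lf t (D t)) ->
  (forall t, 0 < t -> 0 <= Lf t) ->
  (forall t, 0 < t -> D t <= - c0 * (f t - fs)^2) ->
  (forall t s, 0 < t -> 0 < s -> Rabs (f t - f s) <= B * Rabs (t - s)) ->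
  cvinf f fs.
Proof.
  intros Hc Hd HL HD Hlip eps He.
  set (B' := Rabs B + 1). assert (B'p : 0 < B') by (unfold B'; pose proof (Rabs_pos B); lra).
  assert (Hlip' : forall t s, 0 < t -> 0 < s -> Rabs (f t - f s) <= B' * Rabs (t - s)).
  { intros t s Ht Hs. eapply Rle_trans; [apply Hlip; auto|]. apply Rmult_le_compat_r. apply Rabs_pos.
    unfold B'; pose proof (RRle_abs B); lra. }
  assert (HD0 : forall t, 0 < t -> D t <= 0).
  { intros t Ht. specialize (HD t Ht). assert (0 <= (f t - fs)^2) by (apply pow2_ge_0). nra. }
  destruct (glb_pos Lf HL) as [l [Hl1 Hl2]].
  set (tau := eps / (2 * B')). assert (taup : 0 < tau) by (apply Rdiv_lt_0_compat; lra).
  set (eta := c0 * (eps/2)^2 * tau). assert (etap : 0 < eta) by (unfold eta; apply Rmult_lt_0_compat; [apply Rmult_lt_0_compat; [lra| apply pow_lt; lra]| lra]).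
  destruct (Hl2 eta etap) as [T0 [HT0 HT0']].
  exists T0. intros t Ht. apply Rnot_le_lt. intro Hbad.
  assert (Hu : forall u, t < u < t + tau -> D u <= - (c0 * (eps/2)^2)).
  { intros u Hu. assert (Q1 : Rabs (f u - f t) <= B' * Rabs (u - t)) by (apply Hlip'; lra).
    rewrite (Rabs_pos_eq (u - t)) in Q1 by lra.
    assert (B' * (u - t) < B' * tau) by (apply Rmult_lt_compat_l; lra).
    assert (B' * tau = eps/2) by (unfold tau; field; lra).
    assert (Q3 : Rabs (f t - fs) <= Rabs (f t - f u) + Rabs (f u - fs)).
    { replace (f t - fs) with ((f t - f u) + (f u - fs)) by ring. apply Rabs_triang. }
    rewrite (Rabs_minus_sym (f t) (f u)) in Q3.
    assert (A : eps/2 < Rabs (f u - fs)) by lra.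
    assert ((eps/2)^2 <= (f u - fs)^2).
    { rewrite <- (pow2_abs (f u - fs)). nra. }
    specialize (HD u ltac:(lra)). nra. }
  assert (M : Lf (t + tau) - Lf t <= - (c0 * (eps/2)^2) * (t + tau - t)).
  { apply (mvt_gen Lf D); try lra. intros; apply Hd; lra. exact Hu.
    apply (rc_deriv _ _ (D t)); apply Hd; lra. }
  assert (Lf t <= Lf T0) by (apply (nonincr Lf D); auto).
  assert (l <= Lf (t + tau)) by (apply Hl1; lra).
  unfold eta in *. lra.
Qed.

Lemma DL f D fs B :
  (forall t, 0 < t -> derivable_pt_lim f t (D t)) -> cvinf f fs ->
  (forall t s, 0 < t -> 0 < s -> Rabs (D t - D s) <= B * Rabs (t - s)) ->
  cvinf D 0.
Proof.
  intros Hd Hf Hlip eps He.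
  set (B' := Rabs B + 1). assert (B'p : 0 < B') by (unfold B'; pose proof (Rabs_pos B); lra).
  set (tau := eps / (2 * B')). assert (taup : 0 < tau) by (apply Rdiv_lt_0_compat; lra).
  destruct (Hf (eps * tau / 8)) as [T HT]. apply Rmult_lt_0_compat; [nra|lra].
  exists (Rmax T 1). intros t Ht.
  assert (T1 : T <= t) by (eapply Rle_trans; [apply Rmax_l| exact Ht]).
  assert (t1 : 1 <= t) by (eapply Rle_trans; [apply Rmax_r| exact Ht]).
  assert (Hclose : forall u, t < u < t + tau -> Rabs (D u - D t) < eps / 2).
  { intros u Hu. eapply Rle_lt_trans; [apply Hlip; lra|].
    rewrite Rabs_pos_eq by lra.
    apply Rle_lt_trans with (B' * (u - t)).
    apply Rmult_le_compat_r; [lra| unfold B'; pose proof (RRle_abs B); lra].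
    assert (B' * (u - t) < B' * tau) by (apply Rmult_lt_compat_l; lra).
    assert (B' * tau = eps/2) by (unfold tau; field; lra). lra. }
  assert (A1 := HT t T1). assert (A2 := HT (t + tau) ltac:(lra)).
  apply Rabs_def2 in A1. apply Rabs_def2 in A2.
  replace (D t - 0) with (D t) by ring. apply Rabs_def1.
  - apply Rnot_le_lt. intro Hb.
    assert (eps / 2 * (t + tau - t) <= f (t + tau) - f t).
    { apply (mvt_ge f D); try lra. intros; apply Hd; lra.
      intros u Hu. specialize (Hclose u Hu). apply Rabs_def2 in Hclose. lra.
      apply (rc_deriv _ _ (D t)); apply Hd; lra. }
    nra.
  - apply Rnot_le_lt. intro Hb.
    assert (f (t + tau) - f t <= - (eps / 2) * (t + tau - t)).
    { apply (mvt_gen f D); try lra. intros; apply Hd; lra.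
      intros u Hu. specialize (Hclose u Hu). apply Rabs_def2 in Hclose. lra.
      apply (rc_deriv _ _ (D t)); apply Hd; lra. }
    nra.
Qed.

Lemma exit_lemma (m : R -> R) c : 0 < c ->
  (forall t, 0 <= t -> limit1_in m (fun u => 0 <= u) (m t) t) -> 0 < m 0 ->
  (forall t, 0 <= t -> (forall s, 0 <= s <= t -> 0 < m s) -> c <= m t) ->
  forall t, 0 <= t -> c <= m t.
Proof.
  intros Hc Hcont H0 Hstep t0 Ht0. apply NNPP. intro Hbad. apply Rnot_le_lt in Hbad.
  set (E := fun r => 0 <= r <= t0 /\ forall s, 0 <= s <= r -> 0 < m s).
  destruct (completeness E) as [t1 [Hub Hl]].
  - exists t0. intros r [Hr _]; lra.
  - exists 0. split; [lra|]. intros s Hs. replace s with 0 by lra. auto.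
  - assert (E0 : E 0) by (split; [lra|]; intros s Hs; replace s with 0 by lra; auto).
    assert (t1p : 0 <= t1) by (apply Hub; auto).
    assert (t1le : t1 <= t0) by (apply Hl; intros r [Hr _]; lra).
    assert (A : forall s, 0 <= s < t1 -> c <= m s).
    { intros s Hs. apply Hstep. lra. apply NNPP. intro Hn.
      assert (t1 <= s); [|lra]. apply Hl. intros r [Hr1 Hr2].
      destruct (Rle_dec r s) as [|Hrs]; auto. exfalso; apply Hn. intros s' Hs'. apply Hr2. lra. }
    assert (Bc : c <= m t1).
    { destruct (Req_dec t1 0) as [->|Hne].
      - apply Hstep. lra. intros s Hs. replace s with 0 by lra. auto.
      - apply Rnot_lt_le. intro Hlt. destruct (proj1 (limit1_in_unfold _ _ _ _) (Hcont t1 t1p) (c - m t1)) as [alp [Ha H]]. lra.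
        set (s := Rmax 0 (t1 - alp / 2)).
        assert (s1 : 0 <= s) by apply Rmax_l. assert (s2 : t1 - alp/2 <= s) by apply Rmax_r.
        assert (s3 : s < t1). { unfold s, Rmax; destruct Rle_dec; lra. }
        specialize (H s s1). assert (Rabs (s - t1) < alp) by (rewrite Rabs_left by lra; lra).
        specialize (H H1). apply Rabs_def2 in H. specialize (A s ltac:(lra)). lra. }
    assert (Pos : forall s, 0 <= s <= t1 -> 0 < m s).
    { intros s Hs. destruct (Req_dec s t1) as [->|]; [lra|]. specialize (A s ltac:(lra)). lra. }
    destruct (Req_dec t1 t0) as [->|Hne]; [lra|].
    destruct (proj1 (limit1_in_unfold _ _ _ _) (Hcont t1 t1p) (c/2)) as [alp [Ha H]]. lra.
    set (r := Rmin (t1 + alp/2) t0).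
    assert (r1 : r <= t1 + alp/2) by apply Rmin_l. assert (r2 : r <= t0) by apply Rmin_r.
    assert (r3 : t1 < r) by (apply Rmin_glb_lt; lra).
    assert (E r).
    { split; [lra|]. intros s Hs. destruct (Rle_dec s t1); [apply Pos; lra|].
      specialize (H s ltac:(lra)). assert (Rabs (s - t1) < alp) by (rewrite Rabs_pos_eq by lra; lra).
      specialize (H H1). apply Rabs_def2 in H. lra. }
    assert (r <= t1) by (apply Hub; auto). lra.
Qed.

Definition gfun (u : R) := u - 1 - ln u.

Lemma ln_le_pred u : 0 < u -> ln u <= u - 1.
Proof. intros H. assert (K := exp_ineq1_le (ln u)). rewrite exp_ln in K by auto. lra. Qed.

Lemma ln_ge u : 0 < u -> 1 - / u <= ln u.
Proof.
  intros H. assert (K := ln_le_pred (/ u) (Rinv_0_lt_compat _ H)). rewrite ln_Rinv in K by auto. lra.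
Qed.

Lemma g_nonneg u : 0 < u -> 0 <= gfun u.
Proof. intros H. unfold gfun. pose proof (ln_le_pred u H). lra. Qed.

Lemma g_upper u : 0 < u -> gfun u <= (u - 1)^2 / u.
Proof.
  intros H. unfold gfun. pose proof (ln_ge u H).
  replace ((u-1)^2/u) with (u - 2 + / u) by (field; lra). lra.
Qed.

Lemma g_low u G : 0 < u -> gfun u <= G -> exp (-1 - G) <= u.
Proof.
  intros H Hg. unfold gfun in Hg. rewrite <- (exp_ln u) by auto.
  destruct (Req_dec (-1 - G) (ln u)) as [E|E]; [rewrite E; lra|].
  left; apply exp_increasing. lra.
Qed.

Lemma ln2_le : ln 2 <= 1.
Proof. pose proof (ln_le_pred 2). lra. Qed.

Lemma g_up u G : 0 < u -> gfun u <= G -> u <= 2 * (G + 1).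
Proof.
  intros H Hg. unfold gfun in Hg. assert (K := ln_le_pred (u/2) ltac:(lra)).
  unfold Rdiv in K. rewrite ln_mult in K by lra. rewrite ln_Rinv in K by lra.
  pose proof ln2_le. lra.
Qed.

Lemma g_sq u : 0 < u -> (u - 1)^2 <= 2 * (u + 1) * gfun u.
Proof.
  intros H. set (s := sqrt u). assert (ss : s * s = u) by (apply sqrt_sqrt; lra).
  assert (sp : 0 < s) by (apply sqrt_lt_R0; auto).
  assert (lnu : ln u = 2 * ln s) by (rewrite <- ss, ln_mult by auto; ring).
  assert (K := ln_le_pred s sp).
  assert (G : (s - 1)^2 <= gfun u) by (unfold gfun; rewrite lnu, <- ss; nra).
  rewrite <- ss. rewrite <- ss in G.
  replace ((s*s - 1)^2) with ((s-1)^2 * (s+1)^2) by ring.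
  assert ((s+1)^2 <= 2 * (s*s + 1)) by (replace (2*(s*s+1)) with ((s+1)^2 + (s-1)^2) by ring; pose proof (pow2_ge_0 (s-1)); lra).
  assert (0 <= (s-1)^2) by apply pow2_ge_0.
  assert (0 <= gfun (s*s)) by (apply g_nonneg; nra).
  nra.
Qed.

Lemma amgm_ln (l : list R) : (forall a, In a l -> 0 < a) ->
  fold_right Rmult 1 l = 1 -> INR (length l) <= fold_right Rplus 0 l.
Proof.
  intros Hp Hprod.
  assert (K : forall l, (forall a, In a l -> 0 < a) ->
     0 < fold_right Rmult 1 l /\
     ln (fold_right Rmult 1 l) <= fold_right Rplus 0 l - INR (length l)).
  { clear. induction l as [|a l IH]; intros Hp; simpl.
    - rewrite ln_1. split; lra.
    - destruct IH as [IH1 IH2]. intros; apply Hp; simpl; auto.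
      assert (0 < a) by (apply Hp; simpl; auto).
      split. apply Rmult_lt_0_compat; auto.
      rewrite ln_mult by auto. pose proof (ln_le_pred a H).
      destruct (length l); simpl INR in *; [lra|]. lra. }
  destruct (K l Hp) as [_ K2]. rewrite Hprod, ln_1 in K2. lra.
Qed.

Lemma amgm3 a b c : 0 < a -> 0 < b -> 0 < c -> a * b * c = 1 -> 3 <= a + b + c.
Proof.
  intros. assert (K := amgm_ln [a;b;c]). simpl in K.
  assert (1+1+1 <= a + (b + (c + 0))); [|lra]. apply K.
  intros x [->|[->|[->|[]]]]; auto. lra.
Qed.

Lemma amgm4 a b c d : 0 < a -> 0 < b -> 0 < c -> 0 < d -> a * b * c * d = 1 -> 4 <= a + b + c + d.
Proof.
  intros. assert (K := amgm_ln [a;b;c;d]). simpl in K.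
  assert (1+1+1+1 <= a + (b + (c + (d + 0)))); [|lra]. apply K.
  intros x [->|[->|[->|[->|[]]]]]; auto. lra.
Qed.

Record good (P : Params) : Prop := mkGood {
  g_n : (1 <= nn P)%nat;
  g_p : forall k, (1 <= k <= nn P)%nat -> 0 < pk P k;
  g_d : 0 < dd P; g_b : 0 < bb P; g_Phi : 0 < Phis P;
  g_lam : forall k, (1 <= k <= nn P)%nat -> 0 < lam P k;
  g_phi : forall k, (1 <= k <= nn P)%nat -> 0 < phi P k;
  g_mu : forall k, (1 <= k <= nn P)%nat -> 0 < mu P k;
  g_alpha : 0 < palpha P; g_beta : 0 < pbeta P; g_gamma : 0 < pgamma P;
  g_eta : 0 < peta P; g_omega : 0 < pomega P; g_delta : 0 <= pdelta P <= 1 }.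

Definition ww P k := phi P k * pk P k / avgk P.
Definition aa P := pgamma P + pbeta P + dd P.
Definition cc P := dd P + pomega P + palpha P.

Section Basic.
Variable P : Params.
Hypothesis G : good P.

Lemma INR_pos k : (1 <= k)%nat -> 0 < INR k.
Proof. intros; apply lt_0_INR; lia. Qed.

Lemma avgk_pos : 0 < avgk P.
Proof.
  unfold avgk. apply sum1_pos. apply (g_n P G). intros k Hk.
  apply Rmult_lt_0_compat. apply INR_pos; lia. apply (g_p P G); auto.
Qed.

Lemma ww_pos k : (1 <= k <= nn P)%nat -> 0 < ww P k.
Proof.
  intros Hk. unfold ww. apply Rdiv_lt_0_compat; [|apply avgk_pos].
  apply Rmult_lt_0_compat; [apply (g_phi P G)| apply (g_p P G)]; auto.
Qed.

Lemma Theta_eq s : Theta P s = sum1 (nn P) (fun i => ww P i * sI s i).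
Proof.
  unfold Theta. rewrite <- sum1_scal. apply sum1_ext. intros. unfold ww, Rdiv. ring.
Qed.

Lemma Nstar_pos k : (1 <= k <= nn P)%nat -> 0 < Nstar P k.
Proof.
  intros Hk. unfold Nstar. pose proof (INR_pos k ltac:(lia)). pose proof (g_b P G). pose proof (g_Phi P G). pose proof (g_d P G).
  apply Rdiv_lt_0_compat. apply Rmult_lt_0_compat; [apply Rmult_lt_0_compat|]; auto.
  assert (0 < bb P * INR k * Phis P) by (apply Rmult_lt_0_compat; [apply Rmult_lt_0_compat|]; auto). lra.
Qed.

Lemma Lam_eq k : (1 <= k <= nn P)%nat -> Lam P k = dd P * Nstar P k.
Proof.
  intros Hk. unfold Lam, Nstar. pose proof (INR_pos k ltac:(lia)). pose proof (g_b P G). pose proof (g_Phi P G). pose proof (g_d P G).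
  assert (0 < bb P * INR k * Phis P) by (apply Rmult_lt_0_compat; [apply Rmult_lt_0_compat|]; auto).
  field. lra.
Qed.

Lemma Lam_pos k : (1 <= k <= nn P)%nat -> 0 < Lam P k.
Proof. intros Hk. rewrite Lam_eq by auto. apply Rmult_lt_0_compat; [apply (g_d P G)| apply Nstar_pos; auto]. Qed.

Lemma Theta_pos s : (forall k, (1 <= k <= nn P)%nat -> 0 < sI s k) -> 0 < Theta P s.
Proof.
  intros H. rewrite Theta_eq. apply sum1_pos. apply (g_n P G). intros k Hk.
  apply Rmult_lt_0_compat; [apply ww_pos| apply H]; auto.
Qed.

Record eqfacts (E : state) (k : nat) : Prop := mkEF {
  ef_S : 0 < sS E k; ef_V : 0 < sV E k; ef_I : 0 < sI E k; ef_Q : 0 < sQ E k; ef_R : 0 < sR E k;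
  ef_1 : Lam P k = lam P k * sS E k * Theta P E - pomega P * sV E k + (mu P k + dd P) * sS E k;
  ef_2 : mu P k * sS E k = pdelta P * lam P k * sV E k * Theta P E + cc P * sV E k;
  ef_3 : aa P * sI E k = lam P k * (sS E k + pdelta P * sV E k) * Theta P E;
  ef_4 : (peta P + dd P) * sQ E k = pbeta P * sI E k;
  ef_5 : dd P * sR E k = pgamma P * sI E k + peta P * sQ E k + palpha P * sV E k;
  ef_tot : total E k = Nstar P k }.

Lemma eq_facts E : endemic_equilibrium P E -> forall k, (1 <= k <= nn P)%nat -> eqfacts E k.
Proof.
  intros [H HT] k Hk.
  destruct (H 0%nat k ltac:(lia) Hk) as [E0 P0]. destruct (H 1%nat k ltac:(lia) Hk) as [E1 P1].
  destruct (H 2%nat k ltac:(lia) Hk) as [E2 P2]. destruct (H 3%nat k ltac:(lia) Hk) as [E3 P3].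
  destruct (H 4%nat k ltac:(lia) Hk) as [E4 P4]. simpl in *.
  set (Th := Theta P E) in *. set (S := sS E k) in *. set (V := sV E k) in *.
  set (I := sI E k) in *. set (Q := sQ E k) in *. set (R := sR E k) in *.
  pose proof (Lam_pos k Hk). pose proof (g_lam P G k Hk) as Hl. pose proof (g_mu P G k Hk) as Hm.
  pose proof (g_d P G). pose proof (g_omega P G). pose proof (g_alpha P G). pose proof (g_delta P G).
  pose proof (g_beta P G). pose proof (g_gamma P G). pose proof (g_eta P G).
  assert (HS : 0 < S).
  { destruct P0 as [|Z0]; auto. rewrite <- Z0 in E0.
    assert (0 <= pomega P * V) by (apply Rmult_le_pos; lra). nra. }
  assert (HV : 0 < V).
  { destruct P1 as [|Z1]; auto. rewrite <- Z1 in E1. assert (0 < mu P k * S) by nra. nra. }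
  assert (HI : 0 < I).
  { destruct P2 as [|Z2]; auto. rewrite <- Z2 in E2.
    assert (0 < lam P k * S * Th) by (apply Rmult_lt_0_compat; [nra|auto]).
    assert (0 <= pdelta P * lam P k * V * Th) by (apply Rmult_le_pos; [apply Rmult_le_pos; nra| lra]). nra. }
  assert (HQ : 0 < Q).
  { destruct P3 as [|Z3]; auto. rewrite <- Z3 in E3. nra. }
  assert (HR : 0 < R).
  { destruct P4 as [|Z4]; auto. rewrite <- Z4 in E4. nra. }
  assert (Z : Lam P k - dd P * (S+V+I+Q+R) =
    (Lam P k - lam P k * S * Th + pomega P * V - (mu P k + dd P) * S)
    + (mu P k * S - pdelta P * lam P k * V * Th - (dd P + pomega P + palpha P) * V)
    + (lam P k * S * Th + pdelta P * lam P k * V * Th - (pgamma P + pbeta P + dd P) * I)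
    + (pbeta P * I - (peta P + dd P) * Q)
    + (pgamma P * I + peta P * Q + palpha P * V - dd P * R)) by ring.
  rewrite E0, E1, E2, E3, E4 in Z. rewrite Lam_eq in Z by auto.
  assert (Tot : total E k = Nstar P k).
  { unfold total. fold S V I Q R. apply (Rmult_eq_reg_l (dd P)); [|lra]. lra. }
  unfold Th, S, V, I, Q, R in *.
  constructor; auto; unfold cc, aa; lra.
Qed.

End Basic.

Definition brk (lam d om al de Ss Vs Ths x y u z : R) :=
  lam*Ss*Ths*(3 - 1/x - x*z/u - u/z) + de*lam*Vs*Ths*(4 - 1/x - x/y - y*z/u - u/z)
   - om*Vs*(x-y)^2/(x*y) + (d+al)*Vs*(3 - y - x/y - 1/x) - d*Ss*(x-1)^2/x.

Lemma key_identity (S V I Th Ss Vs Is Ths lam mu d om al de a Lm : R) :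
 0 < Ss -> 0 < Vs -> 0 < Is -> 0 < Ths -> 0 < S -> 0 < V -> 0 < I -> 0 < Th ->
 Lm = lam*Ss*Ths - om*Vs + (mu+d)*Ss ->
 mu*Ss = de*lam*Vs*Ths + (d+om+al)*Vs ->
 a*Is = lam*(Ss + de*Vs)*Ths ->
 (1 - Ss/S)*(Lm - lam*S*Th + om*V - (mu+d)*S) + (1 - Vs/V)*(mu*S - de*lam*V*Th - (d+om+al)*V)
   + (1 - Is/I)*(lam*S*Th + de*lam*V*Th - a*I)
 = brk lam d om al de Ss Vs Ths (S/Ss) (V/Vs) (I/Is) (Th/Ths)
   + a*Is*(Th/Ths - I/Is + (I/Is)/(Th/Ths) - 1).
Proof.
  intros. subst Lm. unfold brk.
  assert (Hmu : mu = (de*lam*Vs*Ths + (d+om+al)*Vs)/Ss) by (apply (Rmult_eq_reg_r Ss); [rewrite H8; field|]; lra).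
  assert (Ha : a = lam*(Ss + de*Vs)*Ths/Is) by (apply (Rmult_eq_reg_r Is); [rewrite H9; field|]; lra).
  rewrite Hmu, Ha. field. repeat split; lra.
Qed.

Lemma brk_le lam d om al de Ss Vs Ths x y u z :
  0 <= lam -> 0 <= d -> 0 <= al -> 0 <= de -> 0 < Ss -> 0 < Vs -> 0 < Ths ->
  0 < x -> 0 < y -> 0 < u -> 0 < z ->
  brk lam d om al de Ss Vs Ths x y u z <= - (d*Ss*(x-1)^2/x + om*Vs*(x-y)^2/(x*y)).
Proof.
  intros. unfold brk.
  assert (A1 : 3 <= 1/x + x*z/u + u/z).
  { apply amgm3; try (apply Rdiv_lt_0_compat; try apply Rmult_lt_0_compat; lra). field; lra. }
  assert (A2 : 4 <= 1/x + x/y + y*z/u + u/z).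
  { apply amgm4; try (apply Rdiv_lt_0_compat; try apply Rmult_lt_0_compat; lra). field; lra. }
  assert (A3 : 3 <= y + x/y + 1/x).
  { apply amgm3; try (apply Rdiv_lt_0_compat; try apply Rmult_lt_0_compat; lra). lra. field; lra. }
  assert (0 <= lam*Ss*Ths) by (apply Rmult_le_pos; [apply Rmult_le_pos|]; lra).
  assert (0 <= de*lam*Vs*Ths) by (repeat apply Rmult_le_pos; lra).
  assert (0 <= (d+al)*Vs) by (apply Rmult_le_pos; lra).
  assert (lam*Ss*Ths*(3 - 1/x - x*z/u - u/z) <= 0) by nra.
  assert (de*lam*Vs*Ths*(4 - 1/x - x/y - y*z/u - u/z) <= 0) by nra.
  assert ((d+al)*Vs*(3 - y - x/y - 1/x) <= 0) by nra.
  lra.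
Qed.

Definition Lk E k X := sS E k * gfun (sS X k / sS E k) + sV E k * gfun (sV X k / sV E k)
  + sI E k * gfun (sI X k / sI E k).
Definition LL P E X := sum1 (nn P) (fun k => ww P k * Lk E k X).
Definition Ldk P E k X := (1 - sS E k / sS X k) * sS (rhs P X) k + (1 - sV E k / sV X k) * sV (rhs P X) k
  + (1 - sI E k / sI X k) * sI (rhs P X) k.
Definition LD P E X := sum1 (nn P) (fun k => ww P k * Ldk P E k X).
Definition Bk P E k X :=
  dd P * sS E k * (sS X k / sS E k - 1)^2 / (sS X k / sS E k)
  + pomega P * sV E k * (sS X k / sS E k - sV X k / sV E k)^2 / ((sS X k / sS E k) * (sV X k / sV E k)).
Definition pos3 P X := forall k, (1 <= k <= nn P)%nat -> 0 < sS X k /\ 0 < sV X k /\ 0 < sI X k.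

Section Lyap.
Variable P : Params.
Hypothesis G : good P.
Variable E : state.
Hypothesis HE : endemic_equilibrium P E.

Lemma Bk_nonneg X k : (1 <= k <= nn P)%nat -> pos3 P X -> 0 <= Bk P E k X.
Proof.
  intros Hk HX. destruct (eq_facts P G E HE k Hk). destruct (HX k Hk) as [a [b c]].
  unfold Bk. pose proof (g_d P G). pose proof (g_omega P G).
  apply Rplus_le_le_0_compat; apply Rmult_le_pos; try (left; apply Rinv_0_lt_compat);
    try (apply Rmult_le_pos; [apply Rmult_le_pos; lra| apply pow2_ge_0]);
    try (apply Rdiv_lt_0_compat; lra); try (apply Rmult_lt_0_compat; apply Rdiv_lt_0_compat; lra).
Qed.

Lemma LD_le X : pos3 P X -> LD P E X <= - sum1 (nn P) (fun k => ww P k * Bk P E k X).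
Proof.
  intros HX.
  assert (ThX : 0 < Theta P X) by (apply (Theta_pos P G); intros k Hk; apply HX; auto).
  destruct HE as [_ ThE].
  set (Th := Theta P X) in *. set (Ths := Theta P E) in *.
  assert (Hk : forall k, (1 <= k <= nn P)%nat -> ww P k * Ldk P E k X =
     ww P k * brk (lam P k) (dd P) (pomega P) (palpha P) (pdelta P) (sS E k) (sV E k) Ths
          (sS X k / sS E k) (sV X k / sV E k) (sI X k / sI E k) (Th / Ths)
     + (aa P * Th / Ths * (ww P k * sI E k) - aa P * (ww P k * sI X k)
        + aa P * Ths / Th * (ww P k * sI X k) - aa P * (ww P k * sI E k))).
  { intros k Hk. destruct (eq_facts P G E HE k Hk) as [eS eV eI eQ eR e1 e2 e3 e4 e5 etot]. destruct (HX k Hk) as [a [b c]].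
    replace (aa P * Th / Ths * (ww P k * sI E k) - aa P * (ww P k * sI X k)
        + aa P * Ths / Th * (ww P k * sI X k) - aa P * (ww P k * sI E k))
      with (ww P k * (aa P * sI E k * (Th/Ths - sI X k / sI E k + (sI X k / sI E k)/(Th/Ths) - 1)))
      by (field; repeat split; lra).
    rewrite <- Rmult_plus_distr_l. f_equal.
    rewrite <- (key_identity (sS X k) (sV X k) (sI X k) Th (sS E k) (sV E k) (sI E k) Ths
       (lam P k) (mu P k) (dd P) (pomega P) (palpha P) (pdelta P) (aa P) (Lam P k)); auto. }
  assert (Z : sum1 (nn P) (fun k => aa P * Th / Ths * (ww P k * sI E k) - aa P * (ww P k * sI X k)
        + aa P * Ths / Th * (ww P k * sI X k) - aa P * (ww P k * sI E k)) = 0).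
  { rewrite sum1_minus, sum1_plus, sum1_minus, !sum1_scal. rewrite <- !(Theta_eq P).
    fold Th Ths. field. lra. }
  unfold LD. rewrite (sum1_ext _ _ _ Hk). rewrite sum1_plus, Z, Rplus_0_r.
  rewrite <- (Rmult_1_l (sum1 _ (fun k => ww P k * Bk P E k X))). rewrite Ropp_mult_distr_l.
  rewrite <- sum1_scal. apply sum1_le. intros k Hk'.
  destruct (eq_facts P G E HE k Hk'). destruct (HX k Hk') as [a [b c]].
  pose proof (ww_pos P G k Hk').
  assert (brk (lam P k) (dd P) (pomega P) (palpha P) (pdelta P) (sS E k) (sV E k) Ths
          (sS X k / sS E k) (sV X k / sV E k) (sI X k / sI E k) (Th / Ths) <= - Bk P E k X).
  { unfold Bk. apply brk_le; try (apply Rdiv_lt_0_compat; lra); auto.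
    left; apply (g_lam P G); auto. left; apply (g_d P G). left; apply (g_alpha P G). apply (g_delta P G). }
  nra.
Qed.

End Lyap.

Lemma deriv_gterm f c t l : 0 < c -> 0 < f t -> derivable_pt_lim f t l ->
  derivable_pt_lim (fun u => c * gfun (f u / c)) t ((1 - c / f t) * l).
Proof.
  intros Hc Hf Hd.
  assert (Hh := derivable_pt_lim_mult f (fct_cte (/c)) t _ _ Hd (derivable_pt_lim_const (/c) t)).
  assert (hp : 0 < (f * fct_cte (/c))%F t).
  { unfold mult_fct, fct_cte. apply Rmult_lt_0_compat; auto. apply Rinv_0_lt_compat; auto. }
  assert (H := derivable_pt_lim_scal _ c t _ (derivable_pt_lim_minus _ _ t _ _
     (derivable_pt_lim_minus _ _ t _ _ Hh (derivable_pt_lim_const 1 t))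
     (derivable_pt_lim_comp _ ln t _ _ Hh (derivable_pt_lim_ln _ hp)))).
  eapply deriv_eq; [|exact H].
  unfold mult_fct, fct_cte, minus_fct. field. split; lra.
Qed.

Lemma lim_gterm f D c t : limit1_in f D (f t) t -> 0 < f t -> 0 < c ->
  limit1_in (fun u => c * gfun (f u / c)) D (c * gfun (f t / c)) t.
Proof.
  intros Hl Hf Hc. apply (lim_comp f (fun v => c * gfun (v / c))); auto.
  apply derivable_continuous_pt. eexists.
  apply (deriv_gterm id c (f t) 1 Hc Hf (derivable_pt_lim_id _)).
Qed.

Lemma sol_deriv P x j k t : is_solution P x -> (j <= 4)%nat -> (1 <= k <= nn P)%nat -> 0 < t ->
  derivable_pt_lim (fun u => compo j (x u) k) t (compo j (rhs P (x t)) k).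
Proof. intros H Hj Hk Ht. apply (proj1 (H j k Hj Hk)); auto. Qed.

Lemma sol_lim P x j k t : is_solution P x -> (j <= 4)%nat -> (1 <= k <= nn P)%nat -> 0 <= t ->
  limit1_in (fun u => compo j (x u) k) (fun u => 0 <= u) (compo j (x t) k) t.
Proof.
  intros H Hj Hk Ht. destruct (Req_dec t 0) as [->|].
  - apply (proj2 (H j k Hj Hk)).
  - assert (0 < t) by (destruct Ht; auto; congruence). eapply deriv_lim. apply (sol_deriv P x j k t); auto.
Qed.

Section Traj.
Variable P : Params.
Hypothesis G : good P.
Variable E : state.
Hypothesis HE : endemic_equilibrium P E.
Variable x : R -> state.
Hypothesis Hx : is_solution P x.

Lemma dS k t : (1 <= k <= nn P)%nat -> 0 < t -> derivable_pt_lim (fun u => sS (x u) k) t (sS (rhs P (x t)) k).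
Proof. intros. apply (sol_deriv P x 0 k t); auto; lia. Qed.
Lemma dV k t : (1 <= k <= nn P)%nat -> 0 < t -> derivable_pt_lim (fun u => sV (x u) k) t (sV (rhs P (x t)) k).
Proof. intros. apply (sol_deriv P x 1 k t); auto; lia. Qed.
Lemma dI k t : (1 <= k <= nn P)%nat -> 0 < t -> derivable_pt_lim (fun u => sI (x u) k) t (sI (rhs P (x t)) k).
Proof. intros. apply (sol_deriv P x 2 k t); auto; lia. Qed.
Lemma dQ k t : (1 <= k <= nn P)%nat -> 0 < t -> derivable_pt_lim (fun u => sQ (x u) k) t (sQ (rhs P (x t)) k).
Proof. intros. apply (sol_deriv P x 3 k t); auto; lia. Qed.
Lemma dR k t : (1 <= k <= nn P)%nat -> 0 < t -> derivable_pt_lim (fun u => sR (x u) k) t (sR (rhs P (x t)) k).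
Proof. intros. apply (sol_deriv P x 4 k t); auto; lia. Qed.
Lemma lS k t : (1 <= k <= nn P)%nat -> 0 <= t -> limit1_in (fun u => sS (x u) k) (fun u => 0 <= u) (sS (x t) k) t.
Proof. intros. apply (sol_lim P x 0 k t); auto; lia. Qed.
Lemma lV k t : (1 <= k <= nn P)%nat -> 0 <= t -> limit1_in (fun u => sV (x u) k) (fun u => 0 <= u) (sV (x t) k) t.
Proof. intros. apply (sol_lim P x 1 k t); auto; lia. Qed.
Lemma lI k t : (1 <= k <= nn P)%nat -> 0 <= t -> limit1_in (fun u => sI (x u) k) (fun u => 0 <= u) (sI (x t) k) t.
Proof. intros. apply (sol_lim P x 2 k t); auto; lia. Qed.
Lemma lQ k t : (1 <= k <= nn P)%nat -> 0 <= t -> limit1_in (fun u => sQ (x u) k) (fun u => 0 <= u) (sQ (x t) k) t.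
Proof. intros. apply (sol_lim P x 3 k t); auto; lia. Qed.
Lemma lR k t : (1 <= k <= nn P)%nat -> 0 <= t -> limit1_in (fun u => sR (x u) k) (fun u => 0 <= u) (sR (x t) k) t.
Proof. intros. apply (sol_lim P x 4 k t); auto; lia. Qed.

Lemma deriv_LL t : 0 < t -> pos3 P (x t) ->
  derivable_pt_lim (fun u => LL P E (x u)) t (LD P E (x t)).
Proof.
  intros Ht Hp. unfold LL, LD.
  apply (deriv_sum1 (nn P) (fun k u => ww P k * Lk E k (x u))). intros k Hk.
  destruct (eq_facts P G E HE k Hk) as [eS eV eI _ _ _ _ _ _ _ _]. destruct (Hp k Hk) as [a [b c]].
  apply (derivable_pt_lim_scal (fun u => Lk E k (x u))).
  unfold Lk, Ldk.
  apply (derivable_pt_lim_plus (fun u => sS E k * gfun (sS (x u) k / sS E k) + sV E k * gfun (sV (x u) k / sV E k))).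
  apply (derivable_pt_lim_plus (fun u => sS E k * gfun (sS (x u) k / sS E k))).
  apply (deriv_gterm (fun u => sS (x u) k)); auto. apply dS; auto.
  apply (deriv_gterm (fun u => sV (x u) k)); auto. apply dV; auto.
  apply (deriv_gterm (fun u => sI (x u) k)); auto. apply dI; auto.
Qed.

Lemma lim_LL t : 0 <= t -> pos3 P (x t) ->
  limit1_in (fun u => LL P E (x u)) (fun u => 0 <= u) (LL P E (x t)) t.
Proof.
  intros Ht Hp. unfold LL.
  apply (lim_sum1 (nn P) (fun k u => ww P k * Lk E k (x u))). intros k Hk.
  destruct (eq_facts P G E HE k Hk) as [eS eV eI _ _ _ _ _ _ _ _]. destruct (Hp k Hk) as [a [b c]].
  apply (lim_mult (fun _ => ww P k) (fun u => Lk E k (x u))). apply lim_const.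
  unfold Lk.
  apply (lim_plus (fun u => sS E k * gfun (sS (x u) k / sS E k) + sV E k * gfun (sV (x u) k / sV E k)) (fun u => sI E k * gfun (sI (x u) k / sI E k)) (fun u => 0 <= u) t).
  apply (lim_plus (fun u => sS E k * gfun (sS (x u) k / sS E k)) (fun u => sV E k * gfun (sV (x u) k / sV E k)) (fun u => 0 <= u) t).
  apply (lim_gterm (fun u => sS (x u) k)); auto. apply lS; auto.
  apply (lim_gterm (fun u => sV (x u) k)); auto. apply lV; auto.
  apply (lim_gterm (fun u => sI (x u) k)); auto. apply lI; auto.
Qed.

Lemma Lk_nonneg k X : (1 <= k <= nn P)%nat -> pos3 P X -> 0 <= Lk E k X.
Proof.
  intros Hk Hp. destruct (eq_facts P G E HE k Hk) as [eS eV eI _ _ _ _ _ _ _ _]. destruct (Hp k Hk) as [a [b c]].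
  unfold Lk. assert (0 <= gfun (sS X k / sS E k)) by (apply g_nonneg; apply Rdiv_lt_0_compat; auto).
  assert (0 <= gfun (sV X k / sV E k)) by (apply g_nonneg; apply Rdiv_lt_0_compat; auto).
  assert (0 <= gfun (sI X k / sI E k)) by (apply g_nonneg; apply Rdiv_lt_0_compat; auto).
  assert (0 <= sS E k * gfun (sS X k / sS E k)) by (apply Rmult_le_pos; lra).
  assert (0 <= sV E k * gfun (sV X k / sV E k)) by (apply Rmult_le_pos; lra).
  assert (0 <= sI E k * gfun (sI X k / sI E k)) by (apply Rmult_le_pos; lra). lra.
Qed.

Lemma LL_nonneg X : pos3 P X -> 0 <= LL P E X.
Proof.
  intros Hp. apply sum1_nonneg. intros k Hk. apply Rmult_le_pos. left; apply (ww_pos P G); auto.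
  apply Lk_nonneg; auto.
Qed.

Lemma Lk_le_LL k X : (1 <= k <= nn P)%nat -> pos3 P X -> ww P k * Lk E k X <= LL P E X.
Proof.
  intros Hk Hp. apply (sum1_term_le (nn P) (fun k => ww P k * Lk E k X)); auto.
  intros j Hj. apply Rmult_le_pos. left; apply (ww_pos P G); auto. apply Lk_nonneg; auto.
Qed.

Lemma LD_nonpos X : pos3 P X -> LD P E X <= 0.
Proof.
  intros Hp. eapply Rle_trans. apply (LD_le P G E HE X Hp).
  assert (0 <= sum1 (nn P) (fun k => ww P k * Bk P E k X)); [|lra].
  apply sum1_nonneg. intros k Hk. apply Rmult_le_pos. left; apply (ww_pos P G); auto.
  apply (Bk_nonneg P G E HE); auto.
Qed.

Lemma LL_decr t : 0 <= t -> (forall s, 0 <= s <= t -> pos3 P (x s)) -> LL P E (x t) <= LL P E (x 0).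
Proof.
  intros Ht Hp. destruct (Req_dec t 0) as [->|]; [lra|].
  assert (Htp : 0 < t) by (destruct Ht; auto; congruence).
  assert (LL P E (x t) - LL P E (x 0) <= 0 * (t - 0)); [|lra].
  apply (mvt_gen (fun u => LL P E (x u)) (fun u => LD P E (x u))). lra.
  intros u Hu. apply deriv_LL. lra. apply Hp; lra.
  intros u Hu. apply LD_nonpos. apply Hp; lra.
  unfold rc. apply lim_LL. lra. apply Hp; lra.
Qed.

End Traj.

Lemma Rmin_mono a b c d : a <= c -> b <= d -> Rmin a b <= Rmin c d.
Proof. unfold Rmin; repeat destruct Rle_dec; lra. Qed.

Lemma min1_mono n f g : (forall k, (1 <= k <= n)%nat -> f k <= g k) -> min1 n f <= min1 n g.
Proof.
  induction n; simpl; intros H; [lra|]. apply Rmin_mono. apply IHn; intros; apply H; lia. apply H; lia.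
Qed.

Lemma comp_lb w s L Lkv v : 0 < w -> 0 < s -> 0 < v -> w * Lkv <= L -> s * gfun (v / s) <= Lkv ->
  s * exp (-1 - L / (w * s)) <= v.
Proof.
  intros Hw Hs Hv H1 H2.
  assert (gfun (v / s) <= L / (w * s)).
  { apply (Rmult_le_reg_l (w * s)). nra. replace (w * s * (L / (w * s))) with L by (field; lra). nra. }
  assert (K := g_low (v / s) _ (Rdiv_lt_0_compat _ _ Hv Hs) H).
  apply (Rmult_le_compat_l s) in K; [|lra]. replace (s * (v / s)) with v in K by (field; lra). exact K.
Qed.

Lemma comp_ub w s L Lkv v : 0 < w -> 0 < s -> 0 < v -> w * Lkv <= L -> s * gfun (v / s) <= Lkv ->
  v <= s * (2 * (L / (w * s) + 1)).
Proof.
  intros Hw Hs Hv H1 H2.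
  assert (gfun (v / s) <= L / (w * s)).
  { apply (Rmult_le_reg_l (w * s)). nra. replace (w * s * (L / (w * s))) with L by (field; lra). nra. }
  assert (K := g_up (v / s) _ (Rdiv_lt_0_compat _ _ Hv Hs) H).
  apply (Rmult_le_compat_l s) in K; [|lra]. replace (s * (v / s)) with v in K by (field; lra). exact K.
Qed.

Section Core.
Variable P : Params.
Hypothesis G : good P.
Variable E : state.
Hypothesis HE : endemic_equilibrium P E.
Variable x : R -> state.
Hypothesis Hx : is_solution P x.

Lemma Lk_parts k X : (1 <= k <= nn P)%nat -> pos3 P X ->
  sS E k * gfun (sS X k / sS E k) <= Lk E k X /\ sV E k * gfun (sV X k / sV E k) <= Lk E k X /\
  sI E k * gfun (sI X k / sI E k) <= Lk E k X.
Proof.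
  intros Hk Hp. destruct (eq_facts P G E HE k Hk) as [eS eV eI _ _ _ _ _ _ _ _]. destruct (Hp k Hk) as [a [b c]].
  unfold Lk. assert (0 <= gfun (sS X k / sS E k)) by (apply g_nonneg; apply Rdiv_lt_0_compat; auto).
  assert (0 <= gfun (sV X k / sV E k)) by (apply g_nonneg; apply Rdiv_lt_0_compat; auto).
  assert (0 <= gfun (sI X k / sI E k)) by (apply g_nonneg; apply Rdiv_lt_0_compat; auto).
  assert (0 <= sS E k * gfun (sS X k / sS E k)) by (apply Rmult_le_pos; lra).
  assert (0 <= sV E k * gfun (sV X k / sV E k)) by (apply Rmult_le_pos; lra).
  assert (0 <= sI E k * gfun (sI X k / sI E k)) by (apply Rmult_le_pos; lra). lra.
Qed.

Definition lbk (L0 : R) k :=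
  Rmin (sS E k * exp (-1 - L0 / (ww P k * sS E k)))
   (Rmin (sV E k * exp (-1 - L0 / (ww P k * sV E k))) (sI E k * exp (-1 - L0 / (ww P k * sI E k)))).

Lemma lbk_pos L0 k : (1 <= k <= nn P)%nat -> 0 < lbk L0 k.
Proof.
  intros Hk. destruct (eq_facts P G E HE k Hk) as [eS eV eI _ _ _ _ _ _ _ _].
  unfold lbk. repeat apply Rmin_glb_lt; apply Rmult_lt_0_compat; auto; apply exp_pos.
Qed.

Lemma bounds_from_LL X L0 k : (1 <= k <= nn P)%nat -> pos3 P X -> LL P E X <= L0 ->
  lbk L0 k <= Rmin (sS X k) (Rmin (sV X k) (sI X k)).
Proof.
  intros Hk Hp HL. destruct (eq_facts P G E HE k Hk) as [eS eV eI _ _ _ _ _ _ _ _]. destruct (Hp k Hk) as [a [b c]].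
  assert (W := Lk_le_LL P G E HE k X Hk Hp). pose proof (ww_pos P G k Hk).
  destruct (Lk_parts k X Hk Hp) as [p1 [p2 p3]].
  unfold lbk. apply Rmin_mono. eapply comp_lb; eauto; lra.
  apply Rmin_mono; eapply comp_lb; eauto; lra.
Qed.

Definition mfun u := min1 (nn P) (fun k => Rmin (sS (x u) k) (Rmin (sV (x u) k) (sI (x u) k))).

Lemma mfun_pos3 u : 0 < mfun u -> pos3 P (x u).
Proof.
  intros H k Hk. assert (K := min1_le (nn P) (fun k => Rmin (sS (x u) k) (Rmin (sV (x u) k) (sI (x u) k))) k Hk).
  fold (mfun u) in K. pose proof (Rmin_l (sS (x u) k) (Rmin (sV (x u) k) (sI (x u) k))).
  pose proof (Rmin_r (sS (x u) k) (Rmin (sV (x u) k) (sI (x u) k))).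
  pose proof (Rmin_l (sV (x u) k) (sI (x u) k)). pose proof (Rmin_r (sV (x u) k) (sI (x u) k)). lra.
Qed.

Lemma core : pos3 P (x 0) -> forall t, 0 <= t -> pos3 P (x t) /\ LL P E (x t) <= LL P E (x 0).
Proof.
  intros H0.
  set (L0 := LL P E (x 0)). set (c := min1 (nn P) (lbk L0)).
  assert (cpos : 0 < c) by (apply min1_pos; intros; apply lbk_pos; auto).
  assert (Step : forall t, 0 <= t -> (forall s, 0 <= s <= t -> 0 < mfun s) -> c <= mfun t).
  { intros t Ht Hs. assert (Hp : forall s, 0 <= s <= t -> pos3 P (x s)) by (intros; apply mfun_pos3; auto).
    assert (HL := LL_decr P G E HE x Hx t Ht Hp).
    unfold c, mfun. apply min1_mono. intros k Hk. apply bounds_from_LL; auto. apply Hp; lra. }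
  assert (Hm : forall t, 0 <= t -> c <= mfun t).
  { apply exit_lemma; auto.
    - intros t Ht. unfold mfun.
      apply (lim_min1 (nn P) (fun k u => Rmin (sS (x u) k) (Rmin (sV (x u) k) (sI (x u) k)))).
      intros k Hk.
      apply (lim_Rmin (fun u => sS (x u) k) (fun u => Rmin (sV (x u) k) (sI (x u) k))).
      apply (lS P x Hx); auto. apply (lim_Rmin (fun u => sV (x u) k) (fun u => sI (x u) k)). apply (lV P x Hx); auto. apply (lI P x Hx); auto.
    - unfold mfun. apply min1_pos. intros k Hk. destruct (H0 k Hk) as [a [b d]].
      repeat apply Rmin_glb_lt; auto. }
  intros t Ht. assert (Hp : forall s, 0 <= s <= t -> pos3 P (x s)).
  { intros s Hs. apply mfun_pos3. specialize (Hm s ltac:(lra)). lra. }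
  split. apply Hp; lra. apply LL_decr; auto.
Qed.

Lemma total_const : (forall k, (1 <= k <= nn P)%nat -> total (x 0) k = Nstar P k) ->
  forall k t, (1 <= k <= nn P)%nat -> 0 <= t -> total (x t) k = Nstar P k.
Proof.
  intros H0 k t Hk Ht. pose proof (g_d P G) as Hd.
  assert (B := LF_bound (fun u => total (x u) k) (fun _ => Lam P k) (dd P) (Lam P k) 0 0 t Hd (Rle_refl 0) (Rle_refl 0)).
  assert (Rabs (total (x t) k - Lam P k / dd P) <= Rabs (total (x 0) k - Lam P k / dd P) * exp (- (dd P * (t - 0))) + 0 / dd P).
  { apply B; auto.
    - intros u Hu. unfold total.
      assert (D := derivable_pt_lim_plus _ _ u _ _ (derivable_pt_lim_plus _ _ u _ _ (derivable_pt_lim_plus _ _ u _ _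
         (derivable_pt_lim_plus _ _ u _ _ (dS P x Hx k u Hk Hu) (dV P x Hx k u Hk Hu)) (dI P x Hx k u Hk Hu))
         (dQ P x Hx k u Hk Hu)) (dR P x Hx k u Hk Hu)).
      eapply deriv_eq; [|exact D]. unfold rhs; simpl. ring.
    - unfold rc, total.
      apply (lim_plus (fun u => sS (x u) k + sV (x u) k + sI (x u) k + sQ (x u) k) (fun u => sR (x u) k) (fun u => 0 <= u) 0).
      apply (lim_plus (fun u => sS (x u) k + sV (x u) k + sI (x u) k) (fun u => sQ (x u) k) (fun u => 0 <= u) 0).
      apply (lim_plus (fun u => sS (x u) k + sV (x u) k) (fun u => sI (x u) k) (fun u => 0 <= u) 0).
      apply (lim_plus (fun u => sS (x u) k) (fun u => sV (x u) k) (fun u => 0 <= u) 0).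
      apply (lS P x Hx); auto; lra. apply (lV P x Hx); auto; lra. apply (lI P x Hx); auto; lra. apply (lQ P x Hx); auto; lra. apply (lR P x Hx); auto; lra.
    - intros. unfold Rminus; rewrite Rplus_opp_r, Rabs_R0; lra. }
  rewrite H0 in H by auto. rewrite (Lam_eq P G k Hk) in H.
  replace (dd P * Nstar P k / dd P) with (Nstar P k) in H by (field; lra).
  unfold Rminus at 2 in H. rewrite Rplus_opp_r, Rabs_R0 in H.
  replace (0 / dd P) with 0 in H by (field; lra). rewrite Rmult_0_l, Rplus_0_r in H.
  pose proof (Rabs_pos (total (x t) k - Nstar P k)).
  assert (Rabs (total (x t) k - Nstar P k) = 0) by lra.
  destruct (Rcase_abs (total (x t) k - Nstar P k)) as [Hc|Hc]; [rewrite Rabs_left in H2 by lra| rewrite Rabs_right in H2 by lra]; lra.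
Qed.

End Core.

Definition bnd (f : R -> R) := exists B, forall t, 0 < t -> Rabs (f t) <= B.

Lemma bnd_const c : bnd (fun _ => c).
Proof. exists (Rabs c). intros; lra. Qed.

Lemma bnd_plus f g : bnd f -> bnd g -> bnd (fun t => f t + g t).
Proof.
  intros [B1 H1] [B2 H2]. exists (B1 + B2). intros t Ht.
  eapply Rle_trans; [apply Rabs_triang|]. specialize (H1 t Ht); specialize (H2 t Ht); lra.
Qed.

Lemma bnd_opp f : bnd f -> bnd (fun t => - f t).
Proof. intros [B H]. exists B. intros t Ht. rewrite Rabs_Ropp. auto. Qed.

Lemma bnd_minus f g : bnd f -> bnd g -> bnd (fun t => f t - g t).
Proof. intros. apply (bnd_plus f (fun t => - g t)); auto. apply bnd_opp; auto. Qed.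

Lemma bnd_mult f g : bnd f -> bnd g -> bnd (fun t => f t * g t).
Proof.
  intros [B1 H1] [B2 H2]. exists (B1 * B2). intros t Ht. rewrite Rabs_mult.
  specialize (H1 t Ht); specialize (H2 t Ht).
  apply Rmult_le_compat; auto; apply Rabs_pos.
Qed.

Lemma bnd_ext f g : (forall t, 0 < t -> f t = g t) -> bnd f -> bnd g.
Proof. intros E [B H]. exists B. intros t Ht. rewrite <- E; auto. Qed.

Lemma bnd_sum1 n (F : nat -> R -> R) : (forall k, (1 <= k <= n)%nat -> bnd (F k)) ->
  bnd (fun t => sum1 n (fun k => F k t)).
Proof.
  induction n; intros H; simpl. apply bnd_const.
  apply (bnd_plus (fun t => sum1 n (fun k => F k t)) (F (S n))). apply IHn; intros; apply H; lia. apply H; lia.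
Qed.

Lemma bnd_divc f c : bnd f -> bnd (fun t => f t / c).
Proof. intros. apply (bnd_mult f (fun _ => / c)); auto. apply bnd_const. Qed.

Ltac bnd_tac := repeat (first [ apply bnd_const |
 lazymatch goal with
 | |- bnd (fun t => @?f t + @?g t) => apply (bnd_plus f g)
 | |- bnd (fun t => @?f t - @?g t) => apply (bnd_minus f g)
 | |- bnd (fun t => @?f t * @?g t) => apply (bnd_mult f g)
 | |- bnd (fun t => - @?f t) => apply (bnd_opp f)
 | |- bnd (fun t => @?f t / ?c) => apply (bnd_divc f c)
 end]); auto.

Lemma deriv_divc f c t l : c <> 0 -> derivable_pt_lim f t l -> derivable_pt_lim (fun u => f u / c) t (l / c).
Proof.
  intros Hc H. assert (K := derivable_pt_lim_mult f (fct_cte (/c)) t _ _ H (derivable_pt_lim_const (/c) t)).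
  eapply deriv_eq; [|exact K]. unfold fct_cte. field. auto.
Qed.

Lemma cv_abs f a : cvinf f a -> cvinf (fun t => Rabs (f t - a)) 0.
Proof.
  intros H eps He. destruct (H eps He) as [T HT]. exists T. intros t Ht.
  rewrite Rminus_0_r, Rabs_Rabsolu. auto.
Qed.

Section Attract.
Variable P : Params.
Hypothesis G : good P.
Variable E : state.
Hypothesis HE : endemic_equilibrium P E.
Variable x : R -> state.
Hypothesis Hx : is_solution P x.
Hypothesis Hpd : positive_data P (x 0).

Lemma pos0 : pos3 P (x 0).
Proof. intros k Hk. destruct (Hpd k Hk) as [H _]. repeat split; [apply (H 0%nat)|apply (H 1%nat)|apply (H 2%nat)]; lia. Qed.

Let L0 := LL P E (x 0).

Lemma posT t : 0 <= t -> pos3 P (x t).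
Proof. intros. apply (core P G E HE x Hx pos0 t H). Qed.

Lemma LLT t : 0 <= t -> LL P E (x t) <= L0.
Proof. intros. apply (core P G E HE x Hx pos0 t H). Qed.

Definition supS k := sS E k * (2 * (L0 / (ww P k * sS E k) + 1)).
Definition supV k := sV E k * (2 * (L0 / (ww P k * sV E k) + 1)).
Definition supI k := sI E k * (2 * (L0 / (ww P k * sI E k) + 1)).

Lemma sups k t : (1 <= k <= nn P)%nat -> 0 <= t ->
  sS (x t) k <= supS k /\ sV (x t) k <= supV k /\ sI (x t) k <= supI k.
Proof.
  intros Hk Ht. assert (Hp := posT t Ht). destruct (eq_facts P G E HE k Hk) as [eS eV eI _ _ _ _ _ _ _ _].
  destruct (Hp k Hk) as [a [b c]].
  assert (W := Lk_le_LL P G E HE k (x t) Hk Hp). pose proof (ww_pos P G k Hk). pose proof (LLT t Ht).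
  destruct (Lk_parts P G E HE k (x t) Hk Hp) as [p1 [p2 p3]].
  unfold supS, supV, supI. repeat split; eapply comp_ub; eauto; lra.
Qed.

Lemma bS k : (1 <= k <= nn P)%nat -> bnd (fun t => sS (x t) k).
Proof.
  intros Hk. exists (supS k). intros t Ht. destruct (posT t ltac:(lra) k Hk) as [a _].
  rewrite Rabs_pos_eq by lra. apply sups; auto; lra.
Qed.
Lemma bV k : (1 <= k <= nn P)%nat -> bnd (fun t => sV (x t) k).
Proof.
  intros Hk. exists (supV k). intros t Ht. destruct (posT t ltac:(lra) k Hk) as [_ [a _]].
  rewrite Rabs_pos_eq by lra. apply sups; auto; lra.
Qed.
Lemma bI k : (1 <= k <= nn P)%nat -> bnd (fun t => sI (x t) k).
Proof.
  intros Hk. exists (supI k). intros t Ht. destruct (posT t ltac:(lra) k Hk) as [_ [_ a]].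
  rewrite Rabs_pos_eq by lra. apply sups; auto; lra.
Qed.

Lemma bTh : bnd (fun t => Theta P (x t)).
Proof.
  apply (bnd_ext (fun t => sum1 (nn P) (fun i => ww P i * sI (x t) i))).
  intros; rewrite (Theta_eq P); auto.
  apply (bnd_sum1 (nn P) (fun i t => ww P i * sI (x t) i)). intros k Hk.
  apply (bnd_mult (fun _ => ww P k) (fun t => sI (x t) k)). apply bnd_const. apply bI; auto.
Qed.

Lemma bdS k : (1 <= k <= nn P)%nat -> bnd (fun t => sS (rhs P (x t)) k).
Proof. intros Hk. pose proof (bS k Hk). pose proof (bV k Hk). pose proof bTh. unfold rhs; simpl. bnd_tac. Qed.
Lemma bdV k : (1 <= k <= nn P)%nat -> bnd (fun t => sV (rhs P (x t)) k).
Proof. intros Hk. pose proof (bS k Hk). pose proof (bV k Hk). pose proof bTh. unfold rhs; simpl. bnd_tac. Qed.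
Lemma bdI k : (1 <= k <= nn P)%nat -> bnd (fun t => sI (rhs P (x t)) k).
Proof. intros Hk. pose proof (bS k Hk). pose proof (bV k Hk). pose proof (bI k Hk). pose proof bTh. unfold rhs; simpl. bnd_tac. Qed.

Lemma lip_of f D : (forall t, 0 < t -> derivable_pt_lim f t (D t)) -> bnd D ->
  exists B, forall t s, 0 < t -> 0 < s -> Rabs (f t - f s) <= B * Rabs (t - s).
Proof. intros Hd [B HB]. exists B. apply lip_from_deriv with D; auto. Qed.

Lemma LD_bound k t : (1 <= k <= nn P)%nat -> 0 < t -> LD P E (x t) <= - (ww P k * Bk P E k (x t)).
Proof.
  intros Hk Ht. assert (Hp := posT t ltac:(lra)).
  eapply Rle_trans. apply (LD_le P G E HE (x t) Hp).
  apply Ropp_le_contravar. apply (sum1_term_le (nn P) (fun k => ww P k * Bk P E k (x t))); auto.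
  intros j Hj. apply Rmult_le_pos. left; apply (ww_pos P G); auto. apply (Bk_nonneg P G E HE); auto.
Qed.

Lemma cvS k : (1 <= k <= nn P)%nat -> cvinf (fun t => sS (x t) k) (sS E k).
Proof.
  intros Hk. destruct (eq_facts P G E HE k Hk) as [eS eV eI _ _ _ _ _ _ _ _].
  pose proof (ww_pos P G k Hk) as Hw. pose proof (g_d P G) as Hd. pose proof (g_omega P G) as Ho.
  assert (supp : 0 < supS k) by (destruct (posT 1 ltac:(lra) k Hk) as [a _]; pose proof (sups k 1 Hk ltac:(lra)); lra).
  destruct (lip_of (fun t => sS (x t) k) (fun t => sS (rhs P (x t)) k)) as [B HB].
  intros; apply (dS P x Hx); auto. apply bdS; auto.
  apply (BL (fun u => LL P E (x u)) (fun u => LD P E (x u)) (fun t => sS (x t) k) (sS E k) (ww P k * dd P / supS k) B).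
  - apply Rdiv_lt_0_compat; [nra| auto].
  - intros t Ht. apply (deriv_LL P G E HE x Hx); auto. apply posT; lra.
  - intros t Ht. apply (LL_nonneg P G E HE). apply posT; lra.
  - intros t Ht. eapply Rle_trans. apply (LD_bound k t Hk Ht).
    destruct (posT t ltac:(lra) k Hk) as [a [b c]]. destruct (sups k t Hk ltac:(lra)) as [s1 _].
    unfold Bk.
    set (S := sS (x t) k) in *. set (V := sV (x t) k) in *. set (Ss := sS E k) in *. set (Vs := sV E k) in *.
    assert (0 <= pomega P * Vs * (S / Ss - V / Vs) ^ 2 / (S / Ss * (V / Vs))).
    { apply Rmult_le_pos. apply Rmult_le_pos. nra. apply pow2_ge_0.
      left; apply Rinv_0_lt_compat. apply Rmult_lt_0_compat; apply Rdiv_lt_0_compat; lra. }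
    replace (dd P * Ss * (S / Ss - 1) ^ 2 / (S / Ss)) with (dd P * (S - Ss)^2 / S) by (field; lra).
    assert ((S - Ss)^2 / supS k <= (S - Ss)^2 / S).
    { unfold Rdiv. apply Rmult_le_compat_l. apply pow2_ge_0. apply Rinv_le_contravar; lra. }
    assert (ww P k * dd P / supS k * (S - Ss)^2 = ww P k * dd P * ((S - Ss)^2 / supS k)) by (field; lra).
    assert (ww P k * dd P * ((S - Ss)^2 / supS k) <= ww P k * dd P * ((S - Ss)^2 / S)).
    { apply Rmult_le_compat_l; [nra| auto]. }
    assert (ww P k * (dd P * (S - Ss) ^ 2 / S) = ww P k * dd P * ((S - Ss)^2 / S)) by (field; lra).
    assert (0 <= ww P k * pomega P * Vs * (S / Ss - V / Vs) ^ 2 / (S / Ss * (V / Vs))).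
    { replace (ww P k * pomega P * Vs * (S / Ss - V / Vs) ^ 2 / (S / Ss * (V / Vs))) with
        (ww P k * (pomega P * Vs * (S / Ss - V / Vs) ^ 2 / (S / Ss * (V / Vs)))) by (field; split; lra).
      apply Rmult_le_pos; lra. }
    rewrite Rmult_plus_distr_l.
    replace (ww P k * (pomega P * Vs * (S / Ss - V / Vs) ^ 2 / (S / Ss * (V / Vs)))) with
        (ww P k * pomega P * Vs * (S / Ss - V / Vs) ^ 2 / (S / Ss * (V / Vs))) by (field; split; lra).
    lra.
  - exact HB.
Qed.

Lemma cvXY k : (1 <= k <= nn P)%nat -> cvinf (fun t => sS (x t) k / sS E k - sV (x t) k / sV E k) 0.
Proof.
  intros Hk. destruct (eq_facts P G E HE k Hk) as [eS eV eI _ _ _ _ _ _ _ _].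
  pose proof (ww_pos P G k Hk) as Hw. pose proof (g_d P G) as Hd. pose proof (g_omega P G) as Ho.
  destruct (posT 1 ltac:(lra) k Hk) as [a1 [b1 _]]. destruct (sups k 1 Hk ltac:(lra)) as [s1 [v1 _]].
  set (xm := supS k / sS E k). set (ym := supV k / sV E k).
  assert (xmp : 0 < xm) by (apply Rdiv_lt_0_compat; lra). assert (ymp : 0 < ym) by (apply Rdiv_lt_0_compat; lra).
  destruct (lip_of (fun t => sS (x t) k / sS E k - sV (x t) k / sV E k)
     (fun t => sS (rhs P (x t)) k / sS E k - sV (rhs P (x t)) k / sV E k)) as [B HB].
  { intros t Ht. apply (derivable_pt_lim_minus (fun t => sS (x t) k / sS E k) (fun t => sV (x t) k / sV E k)).
    apply deriv_divc. lra. apply (dS P x Hx); auto. apply deriv_divc. lra. apply (dV P x Hx); auto. }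
  { pose proof (bdS k Hk). pose proof (bdV k Hk). bnd_tac. }
  apply (BL (fun u => LL P E (x u)) (fun u => LD P E (x u)) _ 0 (ww P k * pomega P * sV E k / (xm * ym)) B).
  - apply Rdiv_lt_0_compat. apply Rmult_lt_0_compat; [nra| auto]. nra.
  - intros t Ht. apply (deriv_LL P G E HE x Hx); auto. apply posT; lra.
  - intros t Ht. apply (LL_nonneg P G E HE). apply posT; lra.
  - intros t Ht. eapply Rle_trans. apply (LD_bound k t Hk Ht).
    destruct (posT t ltac:(lra) k Hk) as [a [b c]]. destruct (sups k t Hk ltac:(lra)) as [s2 [v2 _]].
    unfold Bk.
    set (X := sS (x t) k / sS E k) in *. set (Y := sV (x t) k / sV E k) in *.
    assert (Xp : 0 < X) by (apply Rdiv_lt_0_compat; lra). assert (Yp : 0 < Y) by (apply Rdiv_lt_0_compat; lra).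
    assert (Xm : X <= xm) by (unfold X, xm; unfold Rdiv; apply Rmult_le_compat_r; [left; apply Rinv_0_lt_compat|]; lra).
    assert (Ym : Y <= ym) by (unfold Y, ym; unfold Rdiv; apply Rmult_le_compat_r; [left; apply Rinv_0_lt_compat|]; lra).
    assert (0 <= dd P * sS E k * (X - 1) ^ 2 / X).
    { apply Rmult_le_pos. apply Rmult_le_pos. nra. apply pow2_ge_0. left; apply Rinv_0_lt_compat; lra. }
    assert (XY : (X - Y)^2 / (xm * ym) <= (X - Y)^2 / (X * Y)).
    { unfold Rdiv. apply Rmult_le_compat_l. apply pow2_ge_0. apply Rinv_le_contravar. nra.
      apply Rmult_le_compat; lra. }
    replace (X - Y - 0) with (X - Y) by ring.
    assert (ww P k * pomega P * sV E k * ((X - Y)^2 / (xm * ym)) <= ww P k * pomega P * sV E k * ((X - Y)^2 / (X * Y))).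
    { apply Rmult_le_compat_l; [|auto]. apply Rmult_le_pos; [|lra]. nra. }
    assert (0 <= ww P k * (dd P * sS E k * (X - 1) ^ 2 / X)) by (apply Rmult_le_pos; lra).
    replace (- (ww P k * pomega P * sV E k / (xm * ym)) * (X - Y) ^ 2) with (- (ww P k * pomega P * sV E k * ((X - Y)^2 / (xm * ym)))) by (field; lra).
    replace (ww P k * (dd P * sS E k * (X - 1) ^ 2 / X + pomega P * sV E k * (X - Y) ^ 2 / (X * Y)))
      with (ww P k * (dd P * sS E k * (X - 1) ^ 2 / X) + ww P k * pomega P * sV E k * ((X - Y) ^ 2 / (X * Y))) by (field; lra).
    lra.
  - exact HB.
Qed.

Lemma cvV k : (1 <= k <= nn P)%nat -> cvinf (fun t => sV (x t) k) (sV E k).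
Proof.
  intros Hk. destruct (eq_facts P G E HE k Hk) as [eS eV eI _ _ _ _ _ _ _ _].
  assert (K : cvinf (fun t => sV E k * (sS (x t) k * / sS E k - (sS (x t) k / sS E k - sV (x t) k / sV E k)))
    (sV E k * (sS E k * / sS E k - 0))).
  { apply (cv_scal (sV E k) (fun t => sS (x t) k * / sS E k - (sS (x t) k / sS E k - sV (x t) k / sV E k))).
    apply (cv_minus (fun t => sS (x t) k * / sS E k) (fun t => sS (x t) k / sS E k - sV (x t) k / sV E k)).
    apply (cv_mult (fun t => sS (x t) k) (fun _ => / sS E k)). apply cvS; auto. apply cv_const.
    apply cvXY; auto. }
  replace (sV E k * (sS E k * / sS E k - 0)) with (sV E k) in K by (field; lra).
  eapply cv_ext; [|exact K]. intros t Ht. simpl. field. lra.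
Qed.

Lemma n1 : (1 <= 1 <= nn P)%nat.
Proof. pose proof (g_n P G). lia. Qed.

Lemma cvTh : cvinf (fun t => Theta P (x t)) (Theta P E).
Proof.
  pose proof n1 as Hk. destruct (eq_facts P G E HE 1 Hk) as [eS eV eI _ _ e1 _ _ _ _ _].
  pose proof (g_lam P G 1 Hk) as Hl.
  set (D := fun t => sS (rhs P (x t)) 1).
  assert (Dd : forall t, 0 < t -> derivable_pt_lim D t
     (- (lam P 1 * (sS (rhs P (x t)) 1 * Theta P (x t) + sS (x t) 1 * sum1 (nn P) (fun i => ww P i * sI (rhs P (x t)) i)))
      + pomega P * sV (rhs P (x t)) 1 - (mu P 1 + dd P) * sS (rhs P (x t)) 1)).
  { intros t Ht.
    assert (dTh : derivable_pt_lim (fun u => Theta P (x u)) t (sum1 (nn P) (fun i => ww P i * sI (rhs P (x t)) i))).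
    { assert (K := deriv_sum1 (nn P) (fun i u => ww P i * sI (x u) i) (fun i => ww P i * sI (rhs P (x t)) i) t).
      assert (K2 : derivable_pt_lim (fun u => sum1 (nn P) (fun i => ww P i * sI (x u) i)) t
                    (sum1 (nn P) (fun i => ww P i * sI (rhs P (x t)) i))).
      { apply K. intros i Hi. apply (derivable_pt_lim_scal (fun u => sI (x u) i)). apply (dI P x Hx); auto. }
      intros eps He. destruct (K2 eps He) as [del Hdel]. exists del. intros h Hh Hh2.
      rewrite !(Theta_eq P). apply Hdel; auto. }
    assert (H := derivable_pt_lim_minus _ _ t _ _ (derivable_pt_lim_plus _ _ t _ _
       (derivable_pt_lim_minus _ _ t _ _ (derivable_pt_lim_const (Lam P 1) t)
          (derivable_pt_lim_mult _ _ t _ _ (derivable_pt_lim_scal _ (lam P 1) t _ (dS P x Hx 1 t Hk Ht)) dTh))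
       (derivable_pt_lim_scal _ (pomega P) t _ (dV P x Hx 1 t Hk Ht)))
       (derivable_pt_lim_scal _ (mu P 1 + dd P) t _ (dS P x Hx 1 t Hk Ht))).
    unfold D, rhs; simpl. eapply deriv_eq; [|exact H]. unfold mult_real_fct, mult_fct, minus_fct, plus_fct, fct_cte. unfold rhs; simpl; ring. }
  assert (Dlip : exists B, forall t s, 0 < t -> 0 < s -> Rabs (D t - D s) <= B * Rabs (t - s)).
  { apply (lip_of D _ Dd). pose proof (bdS 1 Hk). pose proof (bdV 1 Hk). pose proof (bS 1 Hk). pose proof bTh.
    assert (bnd (fun t => sum1 (nn P) (fun i => ww P i * sI (rhs P (x t)) i))).
    { apply (bnd_sum1 (nn P) (fun i t => ww P i * sI (rhs P (x t)) i)). intros i Hi.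
      apply (bnd_mult (fun _ => ww P i) (fun t => sI (rhs P (x t)) i)). apply bnd_const. apply bdI; auto. }
    bnd_tac. }
  destruct Dlip as [B HB].
  assert (DC : cvinf D 0).
  { apply (DL (fun t => sS (x t) 1) D (sS E 1) B); auto. intros; apply (dS P x Hx); auto. apply cvS; auto. }
  apply (cv_ext (fun t => (Lam P 1 + pomega P * sV (x t) 1 - (mu P 1 + dd P) * sS (x t) 1 - D t) * / (lam P 1 * sS (x t) 1))).
  { intros t Ht. destruct (posT t ltac:(lra) 1%nat Hk) as [a _]. unfold D, rhs; simpl. field. split; lra. }
  replace (Theta P E) with ((Lam P 1 + pomega P * sV E 1 - (mu P 1 + dd P) * sS E 1 - 0) * / (lam P 1 * sS E 1))
    by (rewrite e1; field; split; lra).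
  apply (cv_mult (fun t => Lam P 1 + pomega P * sV (x t) 1 - (mu P 1 + dd P) * sS (x t) 1 - D t) (fun t => / (lam P 1 * sS (x t) 1))).
  - apply cv_minus; auto. apply cv_minus. apply cv_plus. apply cv_const. apply cv_scal. apply cvV; auto.
    apply cv_scal. apply cvS; auto.
  - apply (cv_inv (fun t => lam P 1 * sS (x t) 1)). apply cv_scal. apply cvS; auto. nra.
Qed.

Lemma cvI k : (1 <= k <= nn P)%nat -> cvinf (fun t => sI (x t) k) (sI E k).
Proof.
  intros Hk. destruct (eq_facts P G E HE k Hk) as [eS eV eI _ _ _ _ e3 _ _ _].
  assert (ap : 0 < aa P) by (unfold aa; pose proof (g_d P G); pose proof (g_beta P G); pose proof (g_gamma P G); lra).
  replace (sI E k) with (lam P k * (sS E k + pdelta P * sV E k) * Theta P E / aa P) by (rewrite <- e3; field; lra).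
  apply (LF_cv (fun t => sI (x t) k) (fun t => lam P k * (sS (x t) k + pdelta P * sV (x t) k) * Theta P (x t))); auto.
  - intros u Hu. eapply deriv_eq; [|apply (dI P x Hx); auto]. unfold rhs, aa; simpl. ring.
  - apply (cv_mult (fun t => lam P k * (sS (x t) k + pdelta P * sV (x t) k)) (fun t => Theta P (x t))).
    apply cv_scal. apply cv_plus. apply cvS; auto. apply cv_scal. apply cvV; auto. apply cvTh.
Qed.

Lemma cvQ k : (1 <= k <= nn P)%nat -> cvinf (fun t => sQ (x t) k) (sQ E k).
Proof.
  intros Hk. destruct (eq_facts P G E HE k Hk) as [eS eV eI eQ _ _ _ _ e4 _ _].
  assert (ap : 0 < peta P + dd P) by (pose proof (g_d P G); pose proof (g_eta P G); lra).
  replace (sQ E k) with (pbeta P * sI E k / (peta P + dd P)) by (rewrite <- e4; field; lra).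
  apply (LF_cv (fun t => sQ (x t) k) (fun t => pbeta P * sI (x t) k)); auto.
  - intros u Hu. eapply deriv_eq; [|apply (dQ P x Hx); auto]. unfold rhs; simpl. ring.
  - apply cv_scal. apply cvI; auto.
Qed.

Lemma cvR k : (1 <= k <= nn P)%nat -> cvinf (fun t => sR (x t) k) (sR E k).
Proof.
  intros Hk. destruct (eq_facts P G E HE k Hk) as [eS eV eI eQ _ _ _ _ _ _ etot].
  assert (Tot : forall t, 0 <= t -> total (x t) k = Nstar P k).
  { intros. apply (total_const P G x Hx); auto. intros j Hj. apply (Hpd j Hj). }
  apply (cv_ext (fun t => Nstar P k - sS (x t) k - sV (x t) k - sI (x t) k - sQ (x t) k)).
  { intros t Ht. specialize (Tot t ltac:(lra)). unfold total in Tot. lra. }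
  replace (sR E k) with (Nstar P k - sS E k - sV E k - sI E k - sQ E k) by (unfold total in etot; lra).
  repeat apply cv_minus; try apply cv_const. apply cvS; auto. apply cvV; auto. apply cvI; auto. apply cvQ; auto.
Qed.

Lemma attract_main : forall eps, 0 < eps -> exists T, forall t, T <= t -> sdist P (x t) E < eps.
Proof.
  assert (C : cvinf (fun t => sdist P (x t) E) (sum1 (nn P) (fun _ => 0))).
  { unfold sdist. apply (cv_sum1 (nn P) (fun k t => Rabs (sS (x t) k - sS E k) + Rabs (sV (x t) k - sV E k) + Rabs (sI (x t) k - sI E k)
    + Rabs (sQ (x t) k - sQ E k) + Rabs (sR (x t) k - sR E k)) (fun _ => 0)).
    intros k Hk. replace 0 with (0 + 0 + 0 + 0 + 0) by ring.
    repeat apply cv_plus; apply cv_abs; [apply cvS|apply cvV|apply cvI|apply cvQ|apply cvR]; auto. }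
  rewrite sum1_const, Rmult_0_r in C.
  intros eps He. destruct (C eps He) as [T HT]. exists T. intros t Ht. specialize (HT t Ht).
  rewrite Rminus_0_r in HT. eapply Rle_lt_trans; [apply RRle_abs| exact HT].
Qed.

End Attract.

Lemma sq_le_abs a b : 0 <= b -> a^2 <= b^2 -> Rabs a <= b.
Proof.
  intros Hb H. rewrite <- (pow2_abs a) in H. pose proof (Rabs_pos a).
  apply Rnot_lt_le. intro Hc. assert (b^2 < Rabs a ^ 2) by nra. lra.
Qed.

Definition cst (w s K : R) := s^2 * (2 * (2 * (K / (w * s)) + 3) * (K / (w * s))).

Lemma cst_nonneg w s K : 0 < w -> 0 < s -> 0 <= K -> 0 <= cst w s K.
Proof.
  intros. unfold cst. assert (0 <= K / (w * s)) by (apply Rmult_le_pos; [lra| left; apply Rinv_0_lt_compat; nra]).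
  apply Rmult_le_pos. apply pow2_ge_0. apply Rmult_le_pos; lra.
Qed.

Lemma comp_close w s L Lkv v del K : 0 < w -> 0 < s -> 0 < v -> w * Lkv <= L -> s * gfun (v / s) <= Lkv ->
  0 <= K -> 0 < del <= 1 -> L <= K * del^2 -> Rabs (v - s) <= (1 + cst w s K) * del.
Proof.
  intros Hw Hs Hv H1 H2 HK Hd HL.
  set (Kc := K / (w * s)) in *. assert (Kcp : 0 <= Kc) by (apply Rmult_le_pos; [lra| left; apply Rinv_0_lt_compat; nra]).
  set (u := v / s) in *. assert (up : 0 < u) by (apply Rdiv_lt_0_compat; lra).
  set (g := gfun u) in *. assert (g0 : 0 <= g) by (apply g_nonneg; auto).
  assert (Hg : g <= Kc * del^2).
  { apply (Rmult_le_reg_l (w * s)). nra. unfold Kc. replace (w * s * (K / (w * s) * del^2)) with (K * del^2) by (field; lra).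
    assert (w * (s * g) <= w * Lkv) by (apply Rmult_le_compat_l; lra). rewrite Rmult_assoc. lra. }
  assert (dd1 : del^2 <= 1) by (simpl; nra).
  assert (Hg1 : g <= Kc).
  { assert (Kc * del^2 <= Kc * 1) by (apply Rmult_le_compat_l; lra). lra. }
  assert (Hu := g_up u g up (Rle_refl _)).
  assert (Hsq := g_sq u up). fold g in Hsq.
  assert (A : (u - 1)^2 <= 2 * (2 * Kc + 3) * Kc * del^2).
  { apply Rle_trans with (2 * (u + 1) * g). auto.
    apply Rle_trans with (2 * (2 * Kc + 3) * g). apply Rmult_le_compat_r; lra.
    replace (2 * (2 * Kc + 3) * Kc * del^2) with (2 * (2 * Kc + 3) * (Kc * del^2)) by ring.
    apply Rmult_le_compat_l; lra. }
  assert (B : (v - s)^2 <= cst w s K * del^2).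
  { unfold cst. fold Kc. replace (v - s) with (s * (u - 1)) by (unfold u; field; lra).
    rewrite Rpow_mult_distr. replace (s ^ 2 * (2 * (2 * Kc + 3) * Kc) * del ^ 2) with (s^2 * (2 * (2 * Kc + 3) * Kc * del^2)) by ring.
    apply Rmult_le_compat_l. apply pow2_ge_0. auto. }
  pose proof (cst_nonneg w s K Hw Hs HK).
  apply sq_le_abs. nra.
  eapply Rle_trans; [exact B|]. rewrite Rpow_mult_distr.
  apply Rmult_le_compat_r. apply pow2_ge_0. nra.
Qed.

Section Stab.
Variable P : Params.
Hypothesis G : good P.
Variable E : state.
Hypothesis HE : endemic_equilibrium P E.

Definition mstar := min1 (nn P) (fun k => Rmin (sS E k) (Rmin (sV E k) (Rmin (sI E k) (Rmin (sQ E k) (sR E k))))).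
Definition KK := sum1 (nn P) (fun k => ww P k * (2 / sS E k + 2 / sV E k + 2 / sI E k)).
Definition Ak k := (1 + cst (ww P k) (sS E k) KK) + (1 + cst (ww P k) (sV E k) KK) + (1 + cst (ww P k) (sI E k) KK).
Definition kap := peta P + dd P.
Definition Bk' k := 2 * Ak k + 2 + 2 * pbeta P * Ak k / kap.
Definition Csum := sum1 (nn P) Bk'.

Lemma mstar_pos : 0 < mstar.
Proof.
  apply min1_pos. intros k Hk. destruct (eq_facts P G E HE k Hk) as [eS eV eI eQ eR _ _ _ _ _ _].
  repeat apply Rmin_glb_lt; auto.
Qed.

Lemma mstar_le k : (1 <= k <= nn P)%nat ->
  mstar <= sS E k /\ mstar <= sV E k /\ mstar <= sI E k /\ mstar <= sQ E k /\ mstar <= sR E k.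
Proof.
  intros Hk. assert (K := min1_le (nn P) (fun k => Rmin (sS E k) (Rmin (sV E k) (Rmin (sI E k) (Rmin (sQ E k) (sR E k))))) k Hk).
  fold mstar in K.
  pose proof (Rmin_l (sS E k) (Rmin (sV E k) (Rmin (sI E k) (Rmin (sQ E k) (sR E k))))).
  pose proof (Rmin_r (sS E k) (Rmin (sV E k) (Rmin (sI E k) (Rmin (sQ E k) (sR E k))))).
  pose proof (Rmin_l (sV E k) (Rmin (sI E k) (Rmin (sQ E k) (sR E k)))).
  pose proof (Rmin_r (sV E k) (Rmin (sI E k) (Rmin (sQ E k) (sR E k)))).
  pose proof (Rmin_l (sI E k) (Rmin (sQ E k) (sR E k))). pose proof (Rmin_r (sI E k) (Rmin (sQ E k) (sR E k))).
  pose proof (Rmin_l (sQ E k) (sR E k)). pose proof (Rmin_r (sQ E k) (sR E k)). lra.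
Qed.

Lemma KK_nonneg : 0 <= KK.
Proof.
  apply sum1_nonneg. intros k Hk. destruct (eq_facts P G E HE k Hk) as [eS eV eI _ _ _ _ _ _ _ _].
  apply Rmult_le_pos. left; apply (ww_pos P G); auto.
  assert (0 < 2 / sS E k) by (apply Rdiv_lt_0_compat; lra).
  assert (0 < 2 / sV E k) by (apply Rdiv_lt_0_compat; lra).
  assert (0 < 2 / sI E k) by (apply Rdiv_lt_0_compat; lra). lra.
Qed.

Lemma Ak_nonneg k : (1 <= k <= nn P)%nat -> 0 <= Ak k.
Proof.
  intros Hk. destruct (eq_facts P G E HE k Hk) as [eS eV eI _ _ _ _ _ _ _ _]. pose proof (ww_pos P G k Hk).
  unfold Ak. pose proof KK_nonneg.
  pose proof (cst_nonneg (ww P k) (sS E k) KK). pose proof (cst_nonneg (ww P k) (sV E k) KK).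
  pose proof (cst_nonneg (ww P k) (sI E k) KK). lra.
Qed.

Lemma kap_pos : 0 < kap.
Proof. unfold kap. pose proof (g_eta P G). pose proof (g_d P G). lra. Qed.

Lemma Bk'_nonneg k : (1 <= k <= nn P)%nat -> 0 <= Bk' k.
Proof.
  intros Hk. unfold Bk'. pose proof (Ak_nonneg k Hk). pose proof kap_pos. pose proof (g_beta P G).
  assert (0 <= 2 * pbeta P * Ak k / kap) by (apply Rmult_le_pos; [nra| left; apply Rinv_0_lt_compat; lra]). lra.
Qed.

Lemma Csum_nonneg : 0 <= Csum.
Proof. apply sum1_nonneg. apply Bk'_nonneg. Qed.

Lemma sdist_term s e k : (1 <= k <= nn P)%nat ->
  Rabs (sS s k - sS e k) + Rabs (sV s k - sV e k) + Rabs (sI s k - sI e k) + Rabs (sQ s k - sQ e k)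
  + Rabs (sR s k - sR e k) <= sdist P s e.
Proof.
  intros Hk. apply (sum1_term_le (nn P) (fun k => Rabs (sS s k - sS e k) + Rabs (sV s k - sV e k) + Rabs (sI s k - sI e k)
    + Rabs (sQ s k - sQ e k) + Rabs (sR s k - sR e k))); auto.
  intros j Hj. pose proof (Rabs_pos (sS s j - sS e j)). pose proof (Rabs_pos (sV s j - sV e j)).
  pose proof (Rabs_pos (sI s j - sI e j)). pose proof (Rabs_pos (sQ s j - sQ e j)). pose proof (Rabs_pos (sR s j - sR e j)). lra.
Qed.

Lemma gterm_init v s del : 0 < s -> Rabs (v - s) < del -> del <= s / 2 -> s * gfun (v / s) <= 2 / s * del^2.
Proof.
  intros Hs Hv Hd. apply Rabs_def2 in Hv. assert (vp : 0 < v) by lra.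
  assert (K := g_upper (v / s) (Rdiv_lt_0_compat _ _ vp Hs)).
  apply (Rmult_le_compat_l s) in K; [|lra].
  eapply Rle_trans; [exact K|].
  replace (s * ((v / s - 1) ^ 2 / (v / s))) with ((v - s)^2 / v) by (field; lra).
  assert ((v - s)^2 <= del^2) by (rewrite <- (pow2_abs (v - s)); assert (Rabs (v - s) <= del) by (apply Rabs_le; lra); pose proof (Rabs_pos (v-s)); nra).
  unfold Rdiv. apply Rle_trans with (del^2 * / v). apply Rmult_le_compat_r; [left; apply Rinv_0_lt_compat; lra| auto].
  replace (2 * / s * del ^ 2) with (del^2 * / (s/2)) by (field; lra).
  apply Rmult_le_compat_l. apply pow2_ge_0. apply Rinv_le_contravar; lra.
Qed.

Theorem stability : forall eps, 0 < eps -> exists del, 0 < del /\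
  forall x, is_solution P x -> feasible P (x 0) -> sdist P (x 0) E < del ->
  forall t, 0 <= t -> sdist P (x t) E < eps.
Proof.
  intros eps He. pose proof mstar_pos as Hm. pose proof Csum_nonneg as HC. pose proof KK_nonneg as HK.
  set (del := Rmin (mstar / 2) (Rmin 1 (eps / (Csum + 1)))).
  assert (d1 : del <= mstar / 2) by apply Rmin_l.
  assert (d2 : del <= 1) by (eapply Rle_trans; [apply Rmin_r| apply Rmin_l]).
  assert (d3 : del <= eps / (Csum + 1)) by (eapply Rle_trans; [apply Rmin_r| apply Rmin_r]).
  assert (dp : 0 < del) by (repeat apply Rmin_glb_lt; try lra; apply Rdiv_lt_0_compat; lra).
  exists del. split; auto. intros x Hx Hf Hd t Ht.
  assert (Init : forall k, (1 <= k <= nn P)%nat ->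
     Rabs (sS (x 0) k - sS E k) < del /\ Rabs (sV (x 0) k - sV E k) < del /\ Rabs (sI (x 0) k - sI E k) < del /\
     Rabs (sQ (x 0) k - sQ E k) < del /\ Rabs (sR (x 0) k - sR E k) < del).
  { intros k Hk. pose proof (sdist_term (x 0) E k Hk).
    pose proof (Rabs_pos (sS (x 0) k - sS E k)). pose proof (Rabs_pos (sV (x 0) k - sV E k)).
    pose proof (Rabs_pos (sI (x 0) k - sI E k)). pose proof (Rabs_pos (sQ (x 0) k - sQ E k)). pose proof (Rabs_pos (sR (x 0) k - sR E k)).
    repeat split; lra. }
  assert (Hpd : positive_data P (x 0)).
  { intros k Hk. split; [|apply (Hf k Hk)]. intros j Hj.
    destruct (Init k Hk) as [i1 [i2 [i3 [i4 i5]]]]. destruct (mstar_le k Hk) as [m1 [m2 [m3 [m4 m5]]]].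
    apply Rabs_def2 in i1. apply Rabs_def2 in i2. apply Rabs_def2 in i3. apply Rabs_def2 in i4. apply Rabs_def2 in i5.
    destruct j as [|[|[|[|[|j]]]]]; simpl; try lra; lia. }
  assert (Hp0 := pos0 P x Hpd).
  assert (L0b : LL P E (x 0) <= KK * del^2).
  { unfold LL, KK. rewrite Rmult_comm. rewrite <- sum1_scal. apply sum1_le. intros k Hk.
    destruct (eq_facts P G E HE k Hk) as [eS eV eI _ _ _ _ _ _ _ _]. pose proof (ww_pos P G k Hk).
    destruct (Init k Hk) as [i1 [i2 [i3 _]]]. destruct (mstar_le k Hk) as [m1 [m2 [m3 _]]].
    unfold Lk.
    assert (A1 := gterm_init (sS (x 0) k) (sS E k) del eS i1 ltac:(lra)).
    assert (A2 := gterm_init (sV (x 0) k) (sV E k) del eV i2 ltac:(lra)).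
    assert (A3 := gterm_init (sI (x 0) k) (sI E k) del eI i3 ltac:(lra)).
    replace (del ^ 2 * (ww P k * (2 / sS E k + 2 / sV E k + 2 / sI E k))) with
      (ww P k * (2 / sS E k * del^2 + 2 / sV E k * del^2 + 2 / sI E k * del^2)) by ring.
    apply Rmult_le_compat_l; lra. }
  assert (Close : forall k, (1 <= k <= nn P)%nat -> forall s, 0 <= s ->
      Rabs (sS (x s) k - sS E k) + Rabs (sV (x s) k - sV E k) + Rabs (sI (x s) k - sI E k) <= Ak k * del
      /\ Rabs (sI (x s) k - sI E k) <= Ak k * del).
  { intros k Hk s Hs. destruct (core P G E HE x Hx Hp0 s Hs) as [Hps HLs].
    destruct (eq_facts P G E HE k Hk) as [eS eV eI _ _ _ _ _ _ _ _]. pose proof (ww_pos P G k Hk).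
    destruct (Hps k Hk) as [a [b c]].
    assert (W := Lk_le_LL P G E HE k (x s) Hk Hps).
    destruct (Lk_parts P G E HE k (x s) Hk Hps) as [p1 [p2 p3]].
    assert (C1 := comp_close (ww P k) (sS E k) (LL P E (x s)) _ _ del KK H eS a W p1 HK ltac:(lra) ltac:(lra)).
    assert (C2 := comp_close (ww P k) (sV E k) (LL P E (x s)) _ _ del KK H eV b W p2 HK ltac:(lra) ltac:(lra)).
    assert (C3 := comp_close (ww P k) (sI E k) (LL P E (x s)) _ _ del KK H eI c W p3 HK ltac:(lra) ltac:(lra)).
    unfold Ak. pose proof (cst_nonneg (ww P k) (sS E k) KK). pose proof (cst_nonneg (ww P k) (sV E k) KK).
    split; nra. }
  assert (Term : forall k, (1 <= k <= nn P)%nat ->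
    Rabs (sS (x t) k - sS E k) + Rabs (sV (x t) k - sV E k) + Rabs (sI (x t) k - sI E k) + Rabs (sQ (x t) k - sQ E k)
    + Rabs (sR (x t) k - sR E k) <= Bk' k * del).
  { intros k Hk. destruct (eq_facts P G E HE k Hk) as [eS eV eI eQ eR _ _ _ e4 _ etot].
    destruct (Close k Hk t Ht) as [C1 _].
    assert (QB : Rabs (sQ (x t) k - sQ E k) <= del + pbeta P * (Ak k * del) / kap).
    { pose proof kap_pos. pose proof (g_beta P G).
      assert (Qs : sQ E k = pbeta P * sI E k / kap) by (unfold kap in *; rewrite <- e4; field; lra).
      assert (B := LF_bound (fun u => sQ (x u) k) (fun u => pbeta P * sI (x u) k) kap (pbeta P * sI E k) 0 (pbeta P * (Ak k * del)) t
         kap_pos (Rle_refl 0)).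
      rewrite <- Qs in B.
      assert (Rabs (sQ (x t) k - sQ E k) <= Rabs (sQ (x 0) k - sQ E k) * exp (- (kap * (t - 0))) + pbeta P * (Ak k * del) / kap).
      { apply B; auto.
        - apply Rmult_le_pos. lra. apply Rmult_le_pos; [apply Ak_nonneg; auto| lra].
        - intros u Hu. eapply deriv_eq; [|apply (dQ P x Hx); auto]. unfold rhs, kap; simpl. ring.
        - unfold rc. apply (lQ P x Hx); auto; lra.
        - intros u Hu. replace (pbeta P * sI (x u) k - pbeta P * sI E k) with (pbeta P * (sI (x u) k - sI E k)) by ring.
          rewrite Rabs_mult, Rabs_pos_eq by lra. apply Rmult_le_compat_l. lra. apply (Close k Hk u); lra. }
      assert (exp (- (kap * (t - 0))) <= 1).
      { rewrite <- exp_0. destruct (Req_dec t 0) as [->|]. right; f_equal; ring.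
        left; apply exp_increasing. pose proof kap_pos. assert (0 < t) by lra. nra. }
      destruct (Init k Hk) as [_ [_ [_ [i4 _]]]].
      assert (Rabs (sQ (x 0) k - sQ E k) * exp (- (kap * (t - 0))) <= del).
      { pose proof (exp_pos (- (kap * (t - 0)))). pose proof (Rabs_pos (sQ (x 0) k - sQ E k)). nra. }
      lra. }
    assert (RB : Rabs (sR (x t) k - sR E k) <= Rabs (sS (x t) k - sS E k) + Rabs (sV (x t) k - sV E k)
                  + Rabs (sI (x t) k - sI E k) + Rabs (sQ (x t) k - sQ E k)).
    { assert (Tt : total (x t) k = Nstar P k) by (apply (total_const P G x Hx); auto; intros j Hj; apply (Hf j Hj)).
      unfold total in Tt, etot.
      replace (sR (x t) k - sR E k) with (- ((sS (x t) k - sS E k) + (sV (x t) k - sV E k) + (sI (x t) k - sI E k) + (sQ (x t) k - sQ E k))) by lra.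
      rewrite Rabs_Ropp. eapply Rle_trans; [apply Rabs_triang|]. eapply Rplus_le_compat_r.
      eapply Rle_trans; [apply Rabs_triang|]. eapply Rplus_le_compat_r.
      eapply Rle_trans; [apply Rabs_triang|]. lra. }
    unfold Bk'. replace (pbeta P * (Ak k * del) / kap) with (pbeta P * Ak k / kap * del) in QB by (pose proof kap_pos; field; lra).
    assert ((2 * Ak k + 2 + 2 * pbeta P * Ak k / kap) * del = 2 * (Ak k * del) + 2 * del + 2 * (pbeta P * Ak k / kap * del)) by (pose proof kap_pos; field; lra).
    lra. }
  assert (S1 : sdist P (x t) E <= Csum * del).
  { unfold sdist, Csum. rewrite Rmult_comm, <- sum1_scal. apply sum1_le. intros k Hk.
    rewrite Rmult_comm. apply Term; auto. }
  assert (Csum * del <= Csum * (eps / (Csum + 1))) by (apply Rmult_le_compat_l; auto).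
  assert (Csum * (eps / (Csum + 1)) < eps).
  { apply (Rmult_lt_reg_r (Csum + 1)). lra. replace (Csum * (eps / (Csum + 1)) * (Csum + 1)) with (Csum * eps) by (field; lra). nra. }
  lra.
Qed.

End Stab.

Section Exist.
Variable P : Params.
Hypothesis G : good P.

Definition Dk th k := (lam P k * th + mu P k + dd P) * (pdelta P * lam P k * th + cc P) - pomega P * mu P k.
Definition Sf th k := Lam P k * (pdelta P * lam P k * th + cc P) / Dk th k.
Definition Vf th k := Lam P k * mu P k / Dk th k.
Definition If th k := lam P k * th * (Sf th k + pdelta P * Vf th k) / aa P.
Definition Qf th k := pbeta P * If th k / (peta P + dd P).
Definition Rf th k := (pgamma P * If th k + peta P * Qf th k + palpha P * Vf th k) / dd P.
Definition Gterm th k := phi P k * pk P k * lam P k * (Sf th k + pdelta P * Vf th k) / aa P.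
Definition Gf th := / avgk P * sum1 (nn P) (Gterm th).
Definition Estate th := mkState (fun k => Sf th k) (fun k => Vf th k) (fun k => If th k) (fun k => Qf th k) (fun k => Rf th k).

Lemma aa_pos : 0 < aa P.
Proof. unfold aa. pose proof (g_d P G); pose proof (g_beta P G); pose proof (g_gamma P G). lra. Qed.

Lemma Dk_pos th k : 0 <= th -> (1 <= k <= nn P)%nat -> 0 < Dk th k.
Proof.
  intros Hth Hk. unfold Dk, cc. pose proof (g_lam P G k Hk). pose proof (g_mu P G k Hk).
  pose proof (g_d P G). pose proof (g_omega P G). pose proof (g_alpha P G). pose proof (g_delta P G).
  assert (0 <= lam P k * th) by nra. assert (0 <= pdelta P * lam P k * th) by (apply Rmult_le_pos; nra).
  nra.
Qed.

Lemma SV_pos th k : 0 <= th -> (1 <= k <= nn P)%nat -> 0 < Sf th k /\ 0 < Vf th k.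
Proof.
  intros Hth Hk. pose proof (Dk_pos th k Hth Hk). pose proof (Lam_pos P G k Hk). pose proof (g_mu P G k Hk).
  pose proof (g_lam P G k Hk). pose proof (g_delta P G). unfold cc. pose proof (g_d P G). pose proof (g_omega P G). pose proof (g_alpha P G).
  unfold Sf, Vf. split; apply Rdiv_lt_0_compat; auto.
  apply Rmult_lt_0_compat; auto. unfold cc. assert (0 <= pdelta P * lam P k * th) by (apply Rmult_le_pos; nra). lra.
  apply Rmult_lt_0_compat; auto.
Qed.

Lemma Theta_Estate th : Theta P (Estate th) = th * Gf th.
Proof.
  unfold Theta, Gf. simpl.
  replace (th * (/ avgk P * sum1 (nn P) (Gterm th))) with (/ avgk P * (th * sum1 (nn P) (Gterm th))) by ring.
  f_equal. rewrite <- sum1_scal. apply sum1_ext. intros k Hk. unfold If, Gterm. field. apply Rgt_not_eq, aa_pos.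
Qed.

Lemma Gf0 : Gf 0 = R0num P.
Proof.
  unfold Gf, R0num. f_equal. apply sum1_ext. intros k Hk. pose proof aa_pos.
  pose proof (Dk_pos 0 k (Rle_refl 0) Hk).
  unfold Gterm, Sf, Vf. unfold Dk, cc in *. unfold aa in *.
  field. split; [|lra].
  replace ((dd P + palpha P + pomega P) * dd P + (dd P + palpha P) * mu P k) with
    ((lam P k * 0 + mu P k + dd P) * (pdelta P * lam P k * 0 + (dd P + pomega P + palpha P)) - pomega P * mu P k) by ring.
  lra.
Qed.

Lemma Gterm_bound th k : 0 < th -> (1 <= k <= nn P)%nat -> Gterm th k <= phi P k * pk P k * Lam P k / aa P / th.
Proof.
  intros Hth Hk. pose proof (Dk_pos th k ltac:(lra) Hk) as HD. pose proof (Lam_pos P G k Hk). pose proof (g_mu P G k Hk).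
  pose proof (g_lam P G k Hk) as Hl. pose proof (g_delta P G). pose proof (g_d P G). pose proof (g_omega P G). pose proof (g_alpha P G).
  pose proof aa_pos. pose proof (g_phi P G k Hk). pose proof (g_p P G k Hk).
  assert (K : lam P k * th * (Sf th k + pdelta P * Vf th k) <= Lam P k).
  { unfold Sf, Vf. replace (lam P k * th * (Lam P k * (pdelta P * lam P k * th + cc P) / Dk th k + pdelta P * (Lam P k * mu P k / Dk th k)))
      with (Lam P k * (lam P k * th * (pdelta P * lam P k * th + cc P + pdelta P * mu P k)) / Dk th k) by (field; lra).
    apply (Rmult_le_reg_r (Dk th k)); auto. unfold Rdiv. rewrite Rmult_assoc, Rinv_l, Rmult_1_r by lra.
    apply Rmult_le_compat_l; [lra|]. unfold Dk, cc.
    assert (0 <= pdelta P * lam P k * th) by (apply Rmult_le_pos; nra).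
    assert (pdelta P * mu P k * (lam P k * th) <= mu P k * (pdelta P * lam P k * th)) by nra.
    nra. }
  unfold Gterm. apply (Rmult_le_reg_r th); auto.
  replace (phi P k * pk P k * Lam P k / aa P / th * th) with (phi P k * pk P k * Lam P k / aa P) by (field; lra).
  replace (phi P k * pk P k * lam P k * (Sf th k + pdelta P * Vf th k) / aa P * th) with
    (phi P k * pk P k * (lam P k * th * (Sf th k + pdelta P * Vf th k)) / aa P) by (field; lra).
  unfold Rdiv. apply Rmult_le_compat_r. left; apply Rinv_0_lt_compat; lra.
  apply Rmult_le_compat_l; auto. nra.
Qed.

Lemma Gf_cont th0 : 0 <= th0 -> continuity_pt Gf th0.
Proof.
  intros Hth. unfold continuity_pt, continue_in, Gf.
  apply (lim_mult (fun _ => / avgk P) (fun th => sum1 (nn P) (Gterm th))). apply lim_const.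
  apply (lim_sum1 (nn P) (fun k th => Gterm th k)). intros k Hk.
  assert (continuity_pt (fun th => Gterm th k) th0).
  { unfold Gterm, Sf, Vf. pose proof (Dk_pos th0 k Hth Hk). pose proof aa_pos. unfold Dk in *. reg; lra. }
  exact H.
Qed.

Lemma exists_theta : 1 < R0num P -> exists th, 0 < th /\ Gf th = 1.
Proof.
  intros HR. set (C := / avgk P * sum1 (nn P) (fun k => phi P k * pk P k * Lam P k / aa P)).
  pose proof (avgk_pos P G). pose proof aa_pos.
  assert (C0 : 0 <= C).
  { apply Rmult_le_pos. left; apply Rinv_0_lt_compat; auto. apply sum1_nonneg. intros k Hk.
    pose proof (Lam_pos P G k Hk). pose proof (g_phi P G k Hk). pose proof (g_p P G k Hk).
    apply Rmult_le_pos; [|left; apply Rinv_0_lt_compat; auto]. apply Rmult_le_pos; [apply Rmult_le_pos|]; lra. }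
  set (th1 := 2 * C + 1).
  assert (G1 : Gf th1 < 1).
  { assert (Gf th1 <= C / th1).
    { unfold Gf, C. unfold Rdiv. rewrite Rmult_assoc. apply Rmult_le_compat_l. left; apply Rinv_0_lt_compat; auto.
      rewrite Rmult_comm, <- sum1_scal. apply sum1_le. intros k Hk. rewrite Rmult_comm. fold (Rdiv (phi P k * pk P k * Lam P k / aa P) th1).
      apply Gterm_bound; auto. unfold th1; lra. }
    assert (C / th1 < 1) by (apply (Rmult_lt_reg_r th1); [unfold th1; lra|]; unfold th1; field_simplify; lra).
    lra. }
  destruct (IVT_interv (fun th => 1 - Gf th) 0 th1) as [z [Hz1 Hz2]].
  - intros a Ha. apply continuity_pt_minus. apply continuity_pt_const. intros u v; auto. apply Gf_cont; lra.
  - unfold th1; lra.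
  - rewrite Gf0. lra.
  - lra.
  - exists z. split; [|lra]. destruct Hz1 as [[Hz|Hz] _]; auto. subst z. rewrite Gf0 in Hz2. lra.
Qed.

Lemma rhs_S s k : sS (rhs P s) k = Lam P k - lam P k * sS s k * Theta P s + pomega P * sV s k - (mu P k + dd P) * sS s k.
Proof. reflexivity. Qed.
Lemma rhs_V s k : sV (rhs P s) k = mu P k * sS s k - pdelta P * lam P k * sV s k * Theta P s - (dd P + pomega P + palpha P) * sV s k.
Proof. reflexivity. Qed.
Lemma rhs_I s k : sI (rhs P s) k = lam P k * sS s k * Theta P s + pdelta P * lam P k * sV s k * Theta P s - (pgamma P + pbeta P + dd P) * sI s k.
Proof. reflexivity. Qed.
Lemma rhs_Q s k : sQ (rhs P s) k = pbeta P * sI s k - (peta P + dd P) * sQ s k.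
Proof. reflexivity. Qed.
Lemma rhs_R s k : sR (rhs P s) k = pgamma P * sI s k + peta P * sQ s k + palpha P * sV s k - dd P * sR s k.
Proof. reflexivity. Qed.

Lemma Estate_endemic th : 0 < th -> Gf th = 1 -> endemic_equilibrium P (Estate th).
Proof.
  intros Hth HG.
  assert (HT : Theta P (Estate th) = th) by (rewrite Theta_Estate, HG; ring).
  split; [|lra].
  intros j k Hj Hk.
  destruct (SV_pos th k ltac:(lra) Hk) as [HS HV]. pose proof (Dk_pos th k ltac:(lra) Hk) as HD.
  pose proof aa_pos. pose proof (g_lam P G k Hk). pose proof (g_delta P G). pose proof (g_d P G).
  pose proof (g_beta P G). pose proof (g_gamma P G). pose proof (g_eta P G). pose proof (g_alpha P G).
  assert (HI : 0 < If th k).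
  { unfold If. apply Rdiv_lt_0_compat; auto. apply Rmult_lt_0_compat. nra.
    assert (0 <= pdelta P * Vf th k) by nra. lra. }
  assert (HQ : 0 < Qf th k) by (unfold Qf; apply Rdiv_lt_0_compat; nra).
  assert (HR : 0 < Rf th k) by (unfold Rf; apply Rdiv_lt_0_compat; nra).
  destruct j as [|[|[|[|[|j]]]]]; try lia; cbv beta iota delta [compo];
    [rewrite rhs_S|rewrite rhs_V|rewrite rhs_I|rewrite rhs_Q|rewrite rhs_R]; rewrite ?HT; simpl; split; try lra.
  - unfold Sf, Vf. unfold Dk, cc in *. field. lra.
  - unfold Sf, Vf. unfold Dk, cc in *. field. lra.
  - unfold If, aa in *. field. lra.
  - unfold Qf. field. lra.
  - unfold Rf. field. lra.
Qed.

End Exist.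

Lemma const_solution P E : endemic_equilibrium P E -> is_solution P (fun _ => E).
Proof.
  intros [H _] j k Hj Hk. split.
  - intros t Ht. destruct (H j k Hj Hk) as [Z _]. rewrite Z. apply derivable_pt_lim_const.
  - apply lim_const.
Qed.

Lemma eq_pos_data P (G : good P) E : endemic_equilibrium P E -> positive_data P E.
Proof.
  intros HE k Hk. destruct (eq_facts P G E HE k Hk) as [eS eV eI eQ eR _ _ _ _ _ etot].
  split; auto. intros j Hj. destruct j as [|[|[|[|[|j]]]]]; simpl; auto; lia.
Qed.

Theorem theorem4p5 (P : Params)
  (Hn : (1 <= nn P)%nat)
  (Hp : forall k, (1 <= k <= nn P)%nat -> 0 < pk P k)
  (Hpsum : sum1 (nn P) (pk P) = 1)
  (Hd : 0 < dd P) (Hbd : dd P < bb P)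
  (HPhi : 0 < Phis P)
  (HPhieq : Phis P = / avgk P * sum1 (nn P) (fun i =>
               INR i * pk P i * bb P * Phis P / (dd P + bb P * INR i * Phis P)))
  (Hlam : forall k, (1 <= k <= nn P)%nat -> 0 < lam P k)
  (Hphi : forall k, (1 <= k <= nn P)%nat -> 0 < phi P k)
  (Hmu : forall k, (1 <= k <= nn P)%nat -> 0 < mu P k)
  (Halpha : 0 < palpha P) (Hbeta : 0 < pbeta P) (Hgamma : 0 < pgamma P)
  (Heta : 0 < peta P) (Homega : 0 < pomega P)
  (Hdelta : 0 <= pdelta P <= 1)
  (HR0 : 1 < R0num P) :
  exists E : state,
    endemic_equilibrium P E /\
    (forall E', endemic_equilibrium P E' ->
       forall j k, (j <= 4)%nat -> (1 <= k <= nn P)%nat -> compo j E' k = compo j E k) /\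
    (forall eps, 0 < eps -> exists del, 0 < del /\
       forall x, is_solution P x -> feasible P (x 0) -> sdist P (x 0) E < del ->
         forall t, 0 <= t -> sdist P (x t) E < eps) /\
    (forall x, is_solution P x -> positive_data P (x 0) ->
       forall eps, 0 < eps -> exists T, forall t, T <= t -> sdist P (x t) E < eps).
Proof.
  assert (G : good P). { constructor; try assumption. apply Rlt_trans with (dd P); assumption. }
  destruct (exists_theta P G HR0) as [th [Hth HG]].
  set (E := Estate P th). assert (HE : endemic_equilibrium P E) by (apply Estate_endemic; auto).
  exists E. split; [exact HE|]. split; [|split].
  - intros E' HE' j k Hj Hk.
    assert (A := attract_main P G E HE (fun _ => E') (const_solution P E' HE') (eq_pos_data P G E' HE')).
    assert (Z : Rabs (compo j E' k - compo j E k) <= sdist P E' E).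
    { pose proof (sdist_term P E' E k Hk).
      pose proof (Rabs_pos (sS E' k - sS E k)). pose proof (Rabs_pos (sV E' k - sV E k)).
      pose proof (Rabs_pos (sI E' k - sI E k)). pose proof (Rabs_pos (sQ E' k - sQ E k)). pose proof (Rabs_pos (sR E' k - sR E k)).
      destruct j as [|[|[|[|[|j]]]]]; cbv beta iota delta [compo]; try lra; lia. }
    destruct (Req_dec (compo j E' k) (compo j E k)) as [|Hne]; auto.
    assert (P0 : 0 < Rabs (compo j E' k - compo j E k)) by (apply Rabs_pos_lt; lra).
    destruct (A _ P0) as [T HT]. specialize (HT T (Rle_refl _)). lra.
  - apply (stability P G E HE).
  - intros x Hx Hpd. apply (attract_main P G E HE x Hx Hpd).
Qed.
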